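(* Let $(W,\lambda\colon N\otimes W\to W)$ be an initial algebra of $N\otimes-$ on $\mathsf{SquaMS}$ (so $\lambda$ is an isomorphism), let $V=C(W)$ be its Cauchy completion, and let $\theta\colon N\otimes V\to V$ be the composite of the canonical isometric isomorphism $N\otimes C(W)\cong C(N\otimes W)$ (sending $n\otimes(x_k)_k$ to $(n\otimes x_k)_k$) with $C(\lambda)$. Then $(V,\theta^{-1}\colon V\to N\otimes V)$ is the final $N\otimes-$ coalgebra.
   Context: Let $M_0=\{(r,s)\in[0,1]^2: r\in\{0,1\}\text{ or } s\in\{0,1\}\}$. A square metric space is a pair $(X,S_X)$ with $X$ a metric space with all distances at most $2$ and $S_X\colon M_0\to X$ injective such that (sq1) for $i\in\{0,1\}$, $r,s\in[0,1]$: $d_X(S_X(i,r),S_X(i,s))=|s-r|$ and $d_X(S_X(r,i),S_X(s,i))=|s-r|$; (sq2) $d_X(S_X(r,s),S_X(t,u))\ge|r-t|+|s-u|$. $\mathsf{SquaMS}$: these objects, with short maps $f$ satisfying $f\circ S_X=S_Y$ as morphisms. Let $N=\{0,1,2\}^2$, also viewed as points of $\mathbb{R}^2$. For $X$ in $\mathsf{SquaMS}$, $N\otimes X=(N\times X)/\!\sim$, where $\sim$ is generated by $(m,S_X(p))\sim(n,S_X(q))$ whenever $m,n\in N$ differ by exactly $1$ in exactly one coordinate and $(m+p)/3=(n+q)/3$; $n\otimes x$ is the class of $(n,x)$. With $d((a,u),(b,v))=\frac13 d_X(u,v)$ if $a=b$ and $2$ otherwise, $N\otimes X$ gets the quotient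 metric (infimum over finite chains of sums of consecutive distances, $\sim$-related pairs counting $0$). $S_{N\otimes X}(p)=n\otimes S_X(3p-n)$ for any $n\in N$ with $p\in(n+[0,1]^2)/3$; $(N\otimes f)(n\otimes x)=n\otimes f(x)$. The Cauchy completion $C(X)$ has metric $d((x_i),(y_i))=\lim d_X(x_i,y_i)$ and $S_{C(X)}(p)$ the class of the constant sequence $S_X(p)$. A final coalgebra admits a unique coalgebra morphism from every coalgebra. *)

(* Defs.v *)
From Stdlib Require Import Reals Lra List Relations ClassicalEpsilon.
From Coquelicot Require Import Coquelicot.
Open Scope R_scope.

Definition eqcl {T : Type} (Rel : T -> T -> Prop) : T -> T -> Prop :=
  clos_refl_sym_trans T Rel.

Definition quot (T : Type) (Rel : T -> T -> Prop) : Type :=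
  {P : T -> Prop | exists x, P = eqcl Rel x}.

Definition cls {T : Type} (Rel : T -> T -> Prop) (x : T) : quot T Rel :=
  exist _ (eqcl Rel x) (ex_intro _ x eq_refl).

Definition rep {T : Type} {Rel : T -> T -> Prop} (q : quot T Rel) : T :=
  proj1_sig (constructive_indefinite_description _ (proj2_sig q)).

Definition inM0 (r s : R) : Prop :=
  0 <= r <= 1 /\ 0 <= s <= 1 /\ (r = 0 \/ r = 1 \/ s = 0 \/ s = 1).

(* S_X is represented as a total function R -> R -> X; only its values on
   M0 are ever constrained or used. *)
Record SqRaw := { car : Type; dist : car -> car -> R; sq : R -> R -> car }.

Record isSquaMS (X : SqRaw) : Prop := {
  sq_zero : forall x y, dist X x y = 0 <-> x = y;
  sq_sym : forall x y, dist X x y = dist X y x;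
  sq_tri : forall x y z, dist X x z <= dist X x y + dist X y z;
  sq_bound : forall x y, dist X x y <= 2;
  sq_inj : forall r s r' s', inM0 r s -> inM0 r' s' ->
             sq X r s = sq X r' s' -> r = r' /\ s = s';
  sq1 : forall i r s, (i = 0 \/ i = 1) -> 0 <= r <= 1 -> 0 <= s <= 1 ->
          dist X (sq X i r) (sq X i s) = Rabs (s - r) /\
          dist X (sq X r i) (sq X s i) = Rabs (s - r);
  sq2 : forall r s t u, inM0 r s -> inM0 t u ->
          dist X (sq X r s) (sq X t u) >= Rabs (r - t) + Rabs (s - u)
}.

Definition is_morph (X Y : SqRaw) (f : car X -> car Y) : Prop :=
  (forall x y, dist Y (f x) (f y) <= dist X x y) /\
  (forall r s, inM0 r s -> f (sq X r s) = sq Y r s).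

Inductive three := I0 | I1 | I2.
Definition N := (three * three)%type.
Definition toR (t : three) : R := match t with I0 => 0 | I1 => 1 | I2 => 2 end.
Definition N_eq_dec (m n : N) : {m = n} + {m <> n}.
Proof. decide equality; decide equality. Defined.

Definition adjacent (m n : N) : Prop :=
  (toR (fst m) = toR (fst n) /\ Rabs (toR (snd m) - toR (snd n)) = 1) \/
  (toR (snd m) = toR (snd n) /\ Rabs (toR (fst m) - toR (fst n)) = 1).

Definition Npre (X : SqRaw) : Type := (N * car X)%type.

Definition gen (X : SqRaw) (a b : Npre X) : Prop :=
  exists (m n : N) (r s r' s' : R),
    inM0 r s /\ inM0 r' s' /\ adjacent m n /\
    (toR (fst m) + r) / 3 = (toR (fst n) + r') / 3 /\
    (toR (snd m) + s) / 3 = (toR (snd n) + s') / 3 /\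
    a = (m, sq X r s) /\ b = (n, sq X r' s').

Definition d0 (X : SqRaw) (a b : Npre X) : R :=
  if N_eq_dec (fst a) (fst b) then dist X (snd a) (snd b) / 3 else 2.

(* chains x ~ a1, (a1 -> b1), b1 ~ a2, ..., bk ~ y ; ~-steps cost 0 *)
Fixpoint chain_ok (X : SqRaw) (x y : Npre X) (l : list (Npre X * Npre X)) : Prop :=
  match l with
  | nil => eqcl (gen X) x y
  | (a, b) :: l' => eqcl (gen X) x a /\ chain_ok X b y l'
  end.

Fixpoint chain_cost (X : SqRaw) (l : list (Npre X * Npre X)) : R :=
  match l with
  | nil => 0
  | (a, b) :: l' => d0 X a b + chain_cost X l'
  end.

Definition qdist (X : SqRaw) (x y : Npre X) : R :=
  real (Glb_Rbar (fun c => exists l, chain_ok X x y l /\ c = chain_cost X l)).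

Definition ncoord (r : R) : three :=
  if Rlt_dec r (1/3) then I0 else if Rlt_dec r (2/3) then I1 else I2.

Definition Ntens (X : SqRaw) : SqRaw :=
  {| car := quot (Npre X) (gen X);
     dist := fun p q => qdist X (rep p) (rep q);
     sq := fun r s =>
       let n := (ncoord r, ncoord s) in
       cls (gen X) (n, sq X (3 * r - toR (fst n)) (3 * s - toR (snd n))) |}.

Definition Ntens_map (X Y : SqRaw) (f : car X -> car Y)
  (c : car (Ntens X)) : car (Ntens Y) :=
  cls (gen Y) (fst (rep c), f (snd (rep c))).

Definition cauchy {T : Type} (d : T -> T -> R) (u : nat -> T) : Prop :=
  forall eps, 0 < eps -> exists M : nat, forall m n : nat,
    (M <= m)%nat -> (M <= n)%nat -> d (u m) (u n) < eps.

Definition CS (X : SqRaw) : Type := {u : nat -> car X | cauchy (dist X) u}.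

Definition crel (X : SqRaw) (u v : CS X) : Prop :=
  is_lim_seq (fun i => dist X (proj1_sig u i) (proj1_sig v i)) 0.

Definition Ccar (X : SqRaw) : Type := quot (CS X) (crel X).

Lemma const_cauchy (X : SqRaw) (HX : isSquaMS X) (x : car X) :
  cauchy (dist X) (fun _ => x).
Proof.
  intros eps Heps. exists 0%nat. intros m n _ _.
  rewrite (proj2 (sq_zero X HX x x) eq_refl). exact Heps.
Qed.

Definition Compl (X : SqRaw) (HX : isSquaMS X) : SqRaw :=
  {| car := Ccar X;
     dist := fun a b =>
       real (Lim_seq (fun i => dist X (proj1_sig (rep a) i) (proj1_sig (rep b) i)));
     sq := fun r s =>
       cls (crel X) (exist _ (fun _ => sq X r s) (const_cauchy X HX (sq X r s))) |}.

(* class of a sequence (junk default if not Cauchy; never used on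
   non-Cauchy sequences in the statement's intended reading) *)
Definition mkC (X : SqRaw) (HX : isSquaMS X) (u : nat -> car X) : Ccar X :=
  match excluded_middle_informative (cauchy (dist X) u) with
  | left H => cls (crel X) (exist _ u H)
  | right _ => cls (crel X) (exist _ (fun _ => sq X 0 0) (const_cauchy X HX (sq X 0 0)))
  end.

(* theta = C(lambda) o (N (x) C(W) ~= C(N (x) W)):
   n (x) [(x_k)_k]  |->  [(lambda (n (x) x_k))_k] *)
Definition theta (W : SqRaw) (HW : isSquaMS W) (lam : car (Ntens W) -> car W)
  (c : car (Ntens (Compl W HW))) : car (Compl W HW) :=
  let n := fst (rep c) in
  let xs : Ccar W := snd (rep c) in
  mkC W HW (fun k => lam (cls (gen W) (n, proj1_sig (rep xs) k))).

(* Main.v *)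
From Stdlib Require Import Reals Lra Lia List Relations ClassicalEpsilon Classical
  ProofIrrelevance FunctionalExtensionality PropExtensionality.
From Coquelicot Require Import Coquelicot.
Require Import Defs.
Open Scope R_scope.

Section Quot.
Context {T : Type} (Rel : T -> T -> Prop).

Lemma eqcl_refl x : eqcl Rel x x. Proof. apply rst_refl. Qed.
Lemma eqcl_sym x y : eqcl Rel x y -> eqcl Rel y x. Proof. apply rst_sym. Qed.
Lemma eqcl_trans x y z : eqcl Rel x y -> eqcl Rel y z -> eqcl Rel x z.
Proof. apply rst_trans. Qed.
Lemma eqcl_step x y : Rel x y -> eqcl Rel x y. Proof. apply rst_step. Qed.

Lemma sig_eq_pred (P Q : T -> Prop) (HP : exists x, P = eqcl Rel x)
  (HQ : exists x, Q = eqcl Rel x) :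
  P = Q -> exist (fun P => exists x, P = eqcl Rel x) P HP =
           exist (fun P => exists x, P = eqcl Rel x) Q HQ.
Proof. intros ->. f_equal. apply proof_irrelevance. Qed.

Lemma cls_eq x y : eqcl Rel x y -> cls Rel x = cls Rel y.
Proof.
  intro H. unfold cls. apply sig_eq_pred.
  apply functional_extensionality; intro z; apply propositional_extensionality.
  split; intro H'.
  - eapply eqcl_trans; [apply eqcl_sym; exact H| exact H'].
  - eapply eqcl_trans; [exact H| exact H'].
Qed.

Lemma rep_spec (q : quot T Rel) : proj1_sig q = eqcl Rel (rep q).
Proof.
  unfold rep. destruct (constructive_indefinite_description _ _) as [x Hx]. exact Hx.
Qed.

Lemma cls_rep (q : quot T Rel) : cls Rel (rep q) = q.
Proof.
  pose proof (rep_spec q) as H. destruct q as [P HP]. simpl in H.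
  unfold cls. apply sig_eq_pred. symmetry. exact H.
Qed.

Lemma cls_inj x y : cls Rel x = cls Rel y -> eqcl Rel x y.
Proof.
  intro H. assert (H1 : eqcl Rel x = eqcl Rel y).
  { change (proj1_sig (cls Rel x) = proj1_sig (cls Rel y)). rewrite H. reflexivity. }
  assert (H2 : eqcl Rel y y) by apply eqcl_refl. rewrite <- H1 in H2. exact H2.
Qed.

Lemma rep_cls x : eqcl Rel (rep (cls Rel x)) x.
Proof. apply cls_inj. rewrite cls_rep. reflexivity. Qed.

Lemma quot_ind_rep (q : quot T Rel) : exists x, q = cls Rel x.
Proof. exists (rep q). symmetry. apply cls_rep. Qed.
End Quot.

Definition infR (E : R -> Prop) : R := real (Glb_Rbar E).

Lemma infR_finite (E : R -> Prop) x B :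
  E x -> (forall y, E y -> B <= y) -> Glb_Rbar E = Finite (infR E) /\ B <= infR E <= x.
Proof.
  intros Ex HB. unfold infR. destruct (Glb_Rbar_correct E) as [Hlb Hglb].
  assert (H1 : Rbar_le (Glb_Rbar E) x) by (apply Hlb; exact Ex).
  assert (H2 : Rbar_le B (Glb_Rbar E)) by (apply Hglb; intros y Ey; apply HB; exact Ey).
  destruct (Glb_Rbar E) as [g| |]; simpl in *; try contradiction.
  split; [reflexivity| lra].
Qed.

Lemma infR_lb (E : R -> Prop) x B :
  (forall y, E y -> B <= y) -> E x -> infR E <= x.
Proof. intros HB Ex. destruct (infR_finite E x B Ex HB). lra. Qed.

Lemma infR_glb (E : R -> Prop) m :
  (exists x, E x) -> (forall y, E y -> m <= y) -> m <= infR E.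
Proof. intros [x Ex] HB. destruct (infR_finite E x m Ex HB). lra. Qed.

Lemma infR_approx (E : R -> Prop) B :
  (exists x, E x) -> (forall y, E y -> B <= y) ->
  forall eps, 0 < eps -> exists y, E y /\ y < infR E + eps.
Proof.
  intros [x Ex] HB eps Heps.
  destruct (infR_finite E x B Ex HB) as [Hf _].
  apply NNPP. intro Hn.
  assert (Hl : is_lb_Rbar E (infR E + eps)).
  { intros y Ey. simpl. apply Rnot_lt_le. intro Hy. apply Hn. exists y. split; assumption. }
  destruct (Glb_Rbar_correct E) as [_ Hglb].
  specialize (Hglb _ Hl). rewrite Hf in Hglb. simpl in Hglb. lra.
Qed.

Lemma le_epsilon' x y : (forall eps, 0 < eps -> x <= y + eps) -> x <= y.
Proof.
  intro H. apply Rnot_lt_le. intro Hlt.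
  specialize (H ((x - y)/2) ltac:(lra)). lra.
Qed.

Section Chains.
Context (X : SqRaw) (HX : isSquaMS X).

Lemma dist_refl x : dist X x x = 0.
Proof. apply (sq_zero X HX). reflexivity. Qed.

Lemma dist_nonneg x y : 0 <= dist X x y.
Proof.
  pose proof (sq_tri X HX x y x). rewrite dist_refl in H.
  rewrite (sq_sym X HX y x) in H. lra.
Qed.

Lemma d0_nonneg a b : 0 <= d0 X a b.
Proof.
  unfold d0. destruct N_eq_dec. pose proof (dist_nonneg (snd a) (snd b)). lra. lra.
Qed.

Lemma d0_sym a b : d0 X a b = d0 X b a.
Proof.
  unfold d0. destruct (N_eq_dec (fst a) (fst b)), (N_eq_dec (fst b) (fst a)).
  - rewrite (sq_sym X HX). reflexivity.
  - congruence.
  - congruence.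
  - reflexivity.
Qed.

Lemma d0_le2 a b : d0 X a b <= 2.
Proof.
  unfold d0. destruct N_eq_dec. pose proof (sq_bound X HX (snd a) (snd b)).
  pose proof (dist_nonneg (snd a) (snd b)). lra. lra.
Qed.

Lemma d0_same n x y : d0 X (n, x) (n, y) = dist X x y / 3.
Proof. unfold d0. simpl. destruct N_eq_dec; [reflexivity| congruence]. Qed.

Notation E := (eqcl (gen X)).

Lemma cost_nonneg l : 0 <= chain_cost X l.
Proof.
  induction l as [|[a b] l IH]; simpl. lra. pose proof (d0_nonneg a b). lra.
Qed.

Lemma chain_pre x x' y l : E x x' -> chain_ok X x' y l -> chain_ok X x y l.
Proof.
  destruct l as [|[a b] l]; simpl.
  - apply eqcl_trans.
  - intros H [H1 H2]. split; [eapply eqcl_trans; eassumption| exact H2].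
Qed.

Lemma chain_post x y y' l : chain_ok X x y l -> E y y' -> chain_ok X x y' l.
Proof.
  revert x. induction l as [|[a b] l IH]; simpl; intros x.
  - intros; eapply eqcl_trans; eassumption.
  - intros [H1 H2] H. split; [exact H1| apply IH; assumption].
Qed.

Lemma chain_app x y z l1 l2 :
  chain_ok X x y l1 -> chain_ok X y z l2 -> chain_ok X x z (l1 ++ l2).
Proof.
  revert x. induction l1 as [|[a b] l1 IH]; simpl; intros x.
  - intros H1 H2. eapply chain_pre; eassumption.
  - intros [H1 H2] H3. split; [exact H1| eapply IH; eassumption].
Qed.

Lemma cost_app l1 l2 : chain_cost X (l1 ++ l2) = chain_cost X l1 + chain_cost X l2.
Proof. induction l1 as [|[a b] l1 IH]; simpl. lra. rewrite IH. lra. Qed.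

Definition swap2 (p : Npre X * Npre X) : Npre X * Npre X := (snd p, fst p).

Lemma chain_rev x y l : chain_ok X x y l -> chain_ok X y x (rev (map swap2 l)).
Proof.
  revert x. induction l as [|[a b] l IH]; simpl; intros x.
  - apply eqcl_sym.
  - intros [H1 H2]. apply chain_app with b. apply IH. exact H2.
    simpl. split. apply eqcl_refl. apply eqcl_sym. exact H1.
Qed.

Lemma cost_rev l : chain_cost X (rev (map swap2 l)) = chain_cost X l.
Proof.
  induction l as [|[a b] l IH]; simpl. reflexivity.
  rewrite cost_app, IH. simpl. rewrite d0_sym. lra.
Qed.

Definition qd := qdist X.

Lemma qd_set_ne x y : exists c, (fun c => exists l, chain_ok X x y l /\ c = chain_cost X l) c.
Proof.
  exists (d0 X x y + 0). exists ((x, y) :: nil). simpl. split; [split; apply eqcl_refl| reflexivity].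
Qed.

Lemma qd_set_lb x y : forall c, (fun c => exists l, chain_ok X x y l /\ c = chain_cost X l) c -> 0 <= c.
Proof. intros c [l [_ ->]]. apply cost_nonneg. Qed.

Lemma qd_le_cost x y l : chain_ok X x y l -> qd x y <= chain_cost X l.
Proof.
  intro H. unfold qd, qdist. apply (infR_lb _ _ 0). apply qd_set_lb. exists l. split; auto.
Qed.

Lemma qd_nonneg x y : 0 <= qd x y.
Proof. unfold qd, qdist. apply infR_glb. apply qd_set_ne. apply qd_set_lb. Qed.

Lemma qd_approx x y eps : 0 < eps -> exists l, chain_ok X x y l /\ chain_cost X l < qd x y + eps.
Proof.
  intro He. destruct (infR_approx _ 0 (qd_set_ne x y) (qd_set_lb x y) eps He) as [c [[l [Hl ->]] Hc]].
  exists l. split; assumption.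
Qed.

Lemma qd_glb x y m : (forall l, chain_ok X x y l -> m <= chain_cost X l) -> m <= qd x y.
Proof.
  intro H. unfold qd, qdist. apply infR_glb. apply qd_set_ne. intros c [l [Hl ->]]. auto.
Qed.

Lemma qd_le_d0 a b : qd a b <= d0 X a b.
Proof.
  assert (H' : chain_ok X a b ((a,b)::nil)) by (simpl; split; apply eqcl_refl).
  pose proof (qd_le_cost a b _ H') as H. simpl in H. lra.
Qed.

Lemma qd_le_same n x y : qd (n, x) (n, y) <= dist X x y / 3.
Proof. rewrite <- (d0_same n). apply qd_le_d0. Qed.

Lemma qd_le2 a b : qd a b <= 2.
Proof. pose proof (qd_le_d0 a b). pose proof (d0_le2 a b). lra. Qed.

Lemma qd_eqcl0 a b : E a b -> qd a b = 0.
Proof.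
  intro H. pose proof (qd_le_cost a b nil H) as H0. simpl in H0. pose proof (qd_nonneg a b). lra.
Qed.

Lemma qd_sym a b : qd a b = qd b a.
Proof.
  assert (forall a b, qd a b <= qd b a).
  { intros x y. apply qd_glb. intros l Hl. rewrite <- cost_rev.
    apply qd_le_cost. apply chain_rev. exact Hl. }
  apply Rle_antisym; auto.
Qed.

Lemma qd_tri a b c : qd a c <= qd a b + qd b c.
Proof.
  apply le_epsilon'. intros eps He.
  destruct (qd_approx a b (eps/2)) as [l1 [H1 C1]]. lra.
  destruct (qd_approx b c (eps/2)) as [l2 [H2 C2]]. lra.
  pose proof (qd_le_cost a c (l1 ++ l2) (chain_app _ _ _ _ _ H1 H2)).
  rewrite cost_app in H. lra.
Qed.

Lemma qd_eqcl_l a a' b : E a a' -> qd a b = qd a' b.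
Proof.
  intro H. pose proof (qd_tri a a' b). pose proof (qd_tri a' a b).
  rewrite (qd_eqcl0 _ _ H) in H0. rewrite (qd_eqcl0 _ _ (eqcl_sym _ _ _ H)) in H1. lra.
Qed.

Lemma qd_eqcl_r a b b' : E b b' -> qd a b = qd a b'.
Proof.
  intro H. rewrite (qd_sym a b), (qd_sym a b'). apply qd_eqcl_l. exact H.
Qed.

Lemma potential (phi : Npre X -> R) :
  (forall a b, gen X a b -> phi a = phi b) ->
  (forall a b, phi b - phi a <= d0 X a b) ->
  forall x y, phi y - phi x <= qd x y.
Proof.
  intros Hg Hs.
  assert (HE : forall a b, E a b -> phi a = phi b).
  { intros a b H. induction H; auto. congruence. }
  intros x y. apply qd_glb. intros l. revert x.
  induction l as [|[a b] l IH]; simpl; intros x.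
  - intro H. rewrite (HE _ _ H). lra.
  - intros [H1 H2]. specialize (IH b H2). rewrite (HE _ _ H1). specialize (Hs a b). lra.
Qed.

Lemma potential_abs (phi : Npre X -> R) :
  (forall a b, gen X a b -> phi a = phi b) ->
  (forall a b, Rabs (phi b - phi a) <= d0 X a b) ->
  forall x y, Rabs (phi y - phi x) <= qd x y.
Proof.
  intros Hg Hs x y. apply Rabs_le. split.
  - assert (phi x - phi y <= qd y x).
    { apply potential; auto. intros a b. specialize (Hs a b). apply Rabs_le_between in Hs. lra. }
    rewrite qd_sym in H. lra.
  - apply potential; auto. intros a b. specialize (Hs a b). apply Rabs_le_between in Hs. lra.
Qed.

Lemma Ndist_cls a b : dist (Ntens X) (cls (gen X) a) (cls (gen X) b) = qd a b.
Proof.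
  simpl. fold (qd (rep (cls (gen X) a)) (rep (cls (gen X) b))).
  rewrite (qd_eqcl_l _ a). rewrite (qd_eqcl_r _ _ b). reflexivity.
  apply rep_cls. apply rep_cls.
Qed.

Lemma Ndist_rep c c' : dist (Ntens X) c c' = qd (rep c) (rep c').
Proof. reflexivity. Qed.

End Chains.

Lemma ncoord_range r : 0 <= r <= 1 -> 0 <= 3 * r - toR (ncoord r) <= 1.
Proof. intro H. unfold ncoord. repeat destruct Rlt_dec; simpl; lra. Qed.

Lemma ncoord_0 : ncoord 0 = I0.
Proof. unfold ncoord. destruct Rlt_dec; [reflexivity| lra]. Qed.
Lemma ncoord_1 : ncoord 1 = I2.
Proof. unfold ncoord. repeat destruct Rlt_dec; try lra; reflexivity. Qed.

Lemma ncoord_M0 r s : inM0 r s ->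
  inM0 (3 * r - toR (ncoord r)) (3 * s - toR (ncoord s)).
Proof.
  intros [Hr [Hs Hside]]. split; [apply ncoord_range; auto|]. split; [apply ncoord_range; auto|].
  destruct Hside as [-> | [-> | [-> | -> ]]].
  - left. rewrite ncoord_0. simpl. lra.
  - right; left. rewrite ncoord_1. simpl. lra.
  - right; right; left. rewrite ncoord_0. simpl. lra.
  - right; right; right. rewrite ncoord_1. simpl. lra.
Qed.

Lemma sqN_def X r s : sq (Ntens X) r s =
  cls (gen X) ((ncoord r, ncoord s), sq X (3 * r - toR (ncoord r)) (3 * s - toR (ncoord s))).
Proof. reflexivity. Qed.

Section Map.
Context (X Y : SqRaw) (HX : isSquaMS X) (HY : isSquaMS Y).

Definition Fm (f : car X -> car Y) (a : Npre X) : Npre Y := (fst a, f (snd a)).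

Context (f : car X -> car Y) (Hf : is_morph X Y f).

Lemma gen_map a b : gen X a b -> gen Y (Fm f a) (Fm f b).
Proof.
  intros (m & n & r & s & r' & s' & H1 & H2 & H3 & H4 & H5 & -> & ->).
  exists m, n, r, s, r', s'. unfold Fm; simpl.
  rewrite (proj2 Hf r s H1), (proj2 Hf r' s' H2). split; [|split; [|split; [|split; [|split]]]]; auto.
Qed.

Lemma eqcl_map a b : eqcl (gen X) a b -> eqcl (gen Y) (Fm f a) (Fm f b).
Proof.
  intro H. induction H.
  - apply eqcl_step. apply gen_map. auto.
  - apply eqcl_refl.
  - apply eqcl_sym. auto.
  - eapply eqcl_trans; eauto.
Qed.

Lemma d0_map a b : d0 Y (Fm f a) (Fm f b) <= d0 X a b.
Proof.
  unfold d0, Fm; simpl. destruct N_eq_dec. pose proof (proj1 Hf (snd a) (snd b)). lra. lra.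
Qed.

Lemma qd_map a b : qd Y (Fm f a) (Fm f b) <= qd X a b.
Proof.
  apply qd_glb. intros l Hl.
  assert (forall x, chain_ok X x b l ->
     chain_ok Y (Fm f x) (Fm f b) (map (fun p => (Fm f (fst p), Fm f (snd p))) l) /\
     chain_cost Y (map (fun p => (Fm f (fst p), Fm f (snd p))) l) <= chain_cost X l).
  { clear Hl. induction l as [|[u v] l IH]; simpl; intros x Hx.
    - split. apply eqcl_map; auto. lra.
    - destruct Hx as [H1 H2]. destruct (IH v H2) as [IH1 IH2]. split.
      split; [apply eqcl_map; auto| auto].
      pose proof (d0_map u v). lra. }
  destruct (H a Hl) as [H1 H2].
  pose proof (qd_le_cost Y HY _ _ _ H1). lra.
Qed.

Lemma Nmap_cls a : Ntens_map X Y f (cls (gen X) a) = cls (gen Y) (Fm f a).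
Proof.
  unfold Ntens_map. apply cls_eq.
  change (fst (rep (cls (gen X) a)), f (snd (rep (cls (gen X) a)))) with (Fm f (rep (cls (gen X) a))).
  apply eqcl_map. apply rep_cls.
Qed.

Lemma Nmap_morph : is_morph (Ntens X) (Ntens Y) (Ntens_map X Y f).
Proof.
  split.
  - intros c c'. rewrite <- (cls_rep _ c), <- (cls_rep _ c'). rewrite !Nmap_cls.
    rewrite !Ndist_cls; auto. apply qd_map.
  - intros r s H. rewrite !sqN_def. rewrite Nmap_cls. unfold Fm; simpl.
    destruct (ncoord_M0 r s H) as [Hr [Hs Hside]].
    rewrite (proj2 Hf); [reflexivity|]. apply ncoord_M0. auto.
Qed.
End Map.

Lemma Nmap_contract (X Y : SqRaw) (HY : isSquaMS Y) (h h' : car X -> car Y) c :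
  dist (Ntens Y) (Ntens_map X Y h c) (Ntens_map X Y h' c) <=
  dist Y (h (snd (rep c))) (h' (snd (rep c))) / 3.
Proof.
  unfold Ntens_map. rewrite Ndist_cls; auto. apply qd_le_same; auto.
Qed.

Lemma morph_comp' X Y Z f g : is_morph X Y f -> is_morph Y Z g -> is_morph X Z (fun x => g (f x)).
Proof.
  intros [F1 F2] [G1 G2]. split.
  - intros x y. specialize (F1 x y). specialize (G1 (f x) (f y)). lra.
  - intros r s H. rewrite F2, G2; auto.
Qed.

Lemma Nmap_comp (X Y Z : SqRaw) (f : car X -> car Y) (g : car Y -> car Z)
  (Hf : is_morph X Y f) (Hg : is_morph Y Z g) c :
  Ntens_map X Z (fun x => g (f x)) c = Ntens_map Y Z g (Ntens_map X Y f c).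
Proof.
  rewrite <- (cls_rep _ c). rewrite (Nmap_cls X Z _ (morph_comp' X Y Z f g Hf Hg)).
  rewrite (Nmap_cls X Y f Hf), (Nmap_cls Y Z g Hg). reflexivity.
Qed.

Lemma Nmap_id (X : SqRaw) c : Ntens_map X X (fun x => x) c = c.
Proof.
  unfold Ntens_map. rewrite <- surjective_pairing. apply cls_rep.
Qed.

Lemma morph_id X : isSquaMS X -> is_morph X X (fun x => x).
Proof. intros HX. split; intros; lra || reflexivity. Qed.

Lemma morph_comp X Y Z f g : is_morph X Y f -> is_morph Y Z g -> is_morph X Z (fun x => g (f x)).
Proof.
  intros [F1 F2] [G1 G2]. split.
  - intros x y. specialize (F1 x y). specialize (G1 (f x) (f y)). lra.
  - intros r s H. rewrite F2, G2; auto.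
Qed.

Ltac rabs := unfold Rabs in *; repeat (destruct Rcase_abs); try lra.

Definition L1 (r s t u : R) := Rabs (r - t) + Rabs (s - u).

Lemma M0_closed r s : 0 <= r <= 1 -> 0 <= s <= 1 ->
  (forall eps, 0 < eps -> exists t u, inM0 t u /\ L1 r s t u < eps) -> inM0 r s.
Proof.
  intros Hr Hs H. split; [auto| split; [auto|]].
  apply NNPP; intro Hn.
  assert (r <> 0 /\ r <> 1 /\ s <> 0 /\ s <> 1) as (H1 & H2 & H3 & H4) by tauto.
  set (m := Rmin (Rmin r (1 - r)) (Rmin s (1 - s))).
  assert (Hm : 0 < m).
  { unfold m. repeat apply Rmin_glb_lt; lra. }
  destruct (H m Hm) as (t & u & (Ht & Hu & Hside) & Hl).
  unfold L1, m in *.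
  pose proof (Rmin_l (Rmin r (1 - r)) (Rmin s (1 - s))).
  pose proof (Rmin_r (Rmin r (1 - r)) (Rmin s (1 - s))).
  pose proof (Rmin_l r (1 - r)). pose proof (Rmin_r r (1 - r)).
  pose proof (Rmin_l s (1 - s)). pose proof (Rmin_r s (1 - s)).
  destruct Hside as [-> | [-> | [-> | ->]]]; rabs.
Qed.

Section Geom.
Context (X : SqRaw) (HX : isSquaMS X).
Notation d := (dist X).

Lemma sideL s u : 0 <= s <= 1 -> 0 <= u <= 1 -> d (sq X 0 s) (sq X 0 u) = Rabs (u - s).
Proof. intros. apply (sq1 X HX 0 s u); auto. Qed.
Lemma sideR s u : 0 <= s <= 1 -> 0 <= u <= 1 -> d (sq X 1 s) (sq X 1 u) = Rabs (u - s).
Proof. intros. apply (sq1 X HX 1 s u); auto. Qed.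
Lemma sideB s u : 0 <= s <= 1 -> 0 <= u <= 1 -> d (sq X s 0) (sq X u 0) = Rabs (u - s).
Proof. intros. apply (sq1 X HX 0 s u); auto. Qed.
Lemma sideT s u : 0 <= s <= 1 -> 0 <= u <= 1 -> d (sq X s 1) (sq X u 1) = Rabs (u - s).
Proof. intros. apply (sq1 X HX 1 s u); auto. Qed.

Ltac sides := repeat first
  [ rewrite sideL by lra | rewrite sideR by lra | rewrite sideB by lra | rewrite sideT by lra ].

Ltac via cx cy := eapply Rle_trans; [apply (sq_tri X HX _ (sq X cx cy))|]; sides; rabs.

Lemma sq_le_L1 r s t u : inM0 r s -> inM0 t u -> L1 r s t u < 1 ->
  d (sq X r s) (sq X t u) <= L1 r s t u.
Proof.
  intros (Hr & Hs & Hp) (Ht & Hu & Hq) Hl. unfold L1 in *.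
  destruct Hp as [-> | [-> | [-> | ->]]]; destruct Hq as [-> | [-> | [-> | ->]]];
  try (sides; rabs; fail);
  first [ (via 0 0; fail) | (via 0 1; fail) | (via 1 0; fail) | (via 1 1; fail) | (rabs; fail) | idtac ].
Qed.

Lemma dnn x y : 0 <= d x y. Proof. apply dist_nonneg; auto. Qed.
Lemma dsym x y : d x y = d y x. Proof. apply (sq_sym X HX). Qed.
Lemma dtri x y z : d x z <= d x y + d y z. Proof. apply (sq_tri X HX). Qed.
Lemma dle2 x y : d x y <= 2. Proof. apply (sq_bound X HX). Qed.
Lemma d0eq x : d x x = 0. Proof. apply dist_refl; auto. Qed.

Lemma M0_00 : inM0 0 0. Proof. split; [lra| split; [lra| left; reflexivity]]. Qed.

Definition infM0 (g : R -> R -> R) (z : car X) : R :=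
  infR (fun c => exists t u, inM0 t u /\ c = g t u + d z (sq X t u)).

Section InfM0.
Context (g : R -> R -> R) (B : R) (HB : forall t u, inM0 t u -> B <= g t u).

Lemma infM0_ne z : exists c, (fun c => exists t u, inM0 t u /\ c = g t u + d z (sq X t u)) c.
Proof. exists (g 0 0 + d z (sq X 0 0)). exists 0, 0. split; [apply M0_00| reflexivity]. Qed.
Lemma infM0_lbs z : forall c, (fun c => exists t u, inM0 t u /\ c = g t u + d z (sq X t u)) c -> B <= c.
Proof. intros c (t & u & H & ->). pose proof (HB t u H). pose proof (dnn z (sq X t u)). lra. Qed.

Lemma infM0_le z t u : inM0 t u -> infM0 g z <= g t u + d z (sq X t u).
Proof. intro H. unfold infM0. apply (infR_lb _ _ B). apply infM0_lbs. exists t, u. auto. Qed.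

Lemma infM0_ge z m : (forall t u, inM0 t u -> m <= g t u + d z (sq X t u)) -> m <= infM0 g z.
Proof. intro H. unfold infM0. apply infR_glb. apply infM0_ne. intros c (t & u & Ht & ->). auto. Qed.

Lemma infM0_approx z eps : 0 < eps -> exists t u, inM0 t u /\ g t u + d z (sq X t u) < infM0 g z + eps.
Proof.
  intro He. destruct (infR_approx _ B (infM0_ne z) (infM0_lbs z) eps He) as (c & (t & u & Ht & ->) & Hc).
  exists t, u. auto.
Qed.

Lemma infM0_lip z z' : infM0 g z <= infM0 g z' + d z z'.
Proof.
  assert (infM0 g z - d z z' <= infM0 g z'); [|lra].
  apply infM0_ge. intros t u H. pose proof (infM0_le z t u H).
  pose proof (dtri z z' (sq X t u)). lra.
Qed.

Lemma infM0_lip_abs z z' : Rabs (infM0 g z - infM0 g z') <= d z z'.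
Proof.
  pose proof (infM0_lip z z'). pose proof (infM0_lip z' z). rewrite dsym in H0.
  apply Rabs_le. lra.
Qed.
End InfM0.

Definition Uf := infM0 Rplus.
Definition Vf := infM0 Rminus.
Definition beta := infM0 (fun _ _ => 0).

Lemma HBU : forall t u, inM0 t u -> 0 <= t + u.
Proof. intros t u (H1 & H2 & _). lra. Qed.
Lemma HBV : forall t u, inM0 t u -> -1 <= t - u.
Proof. intros t u (H1 & H2 & _). lra. Qed.
Lemma HBb : forall t u, inM0 t u -> 0 <= (fun _ _ => 0) t u.
Proof. intros. lra. Qed.

Lemma Uf_sq r s : inM0 r s -> Uf (sq X r s) = r + s.
Proof.
  intro H. unfold Uf. apply Rle_antisym.
  - pose proof (infM0_le _ _ HBU (sq X r s) r s H). rewrite d0eq in H0. cbv beta in H0. lra.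
  - apply infM0_ge. intros t u Ht. pose proof (sq2 X HX r s t u H Ht). cbv beta. rabs.
Qed.

Lemma Vf_sq r s : inM0 r s -> Vf (sq X r s) = r - s.
Proof.
  intro H. unfold Vf. apply Rle_antisym.
  - pose proof (infM0_le _ _ HBV (sq X r s) r s H). rewrite d0eq in H0. cbv beta in H0. lra.
  - apply infM0_ge. intros t u Ht. pose proof (sq2 X HX r s t u H Ht). cbv beta. rabs.
Qed.

Definition clamp (x : R) := Rmax 0 (Rmin 1 x).
Lemma clamp_range x : 0 <= clamp x <= 1.
Proof. unfold clamp. unfold Rmax, Rmin. repeat destruct Rle_dec; lra. Qed.
Lemma clamp_id x : 0 <= x <= 1 -> clamp x = x.
Proof. intro. unfold clamp, Rmax, Rmin. repeat destruct Rle_dec; lra. Qed.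
Lemma clamp_lip x y : Rabs (clamp x - clamp y) <= Rabs (x - y).
Proof. unfold clamp, Rmax, Rmin. repeat destruct Rle_dec; rabs. Qed.

Definition psix z := clamp ((Uf z + Vf z) / 2).
Definition psiy z := clamp ((Uf z - Vf z) / 2).

Lemma psi_range z : 0 <= psix z <= 1 /\ 0 <= psiy z <= 1.
Proof. split; apply clamp_range. Qed.

Lemma psi_sq r s : inM0 r s -> psix (sq X r s) = r /\ psiy (sq X r s) = s.
Proof.
  intro H. unfold psix, psiy. rewrite Uf_sq, Vf_sq by auto.
  destruct H as (H1 & H2 & _).
  replace ((r + s + (r - s)) / 2) with r by lra. replace ((r + s - (r - s)) / 2) with s by lra.
  split; apply clamp_id; lra.
Qed.

Lemma psi_lip z z' : Rabs (psix z - psix z') + Rabs (psiy z - psiy z') <= d z z'.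
Proof.
  pose proof (infM0_lip_abs _ _ HBU z z') as HU. pose proof (infM0_lip_abs _ _ HBV z z') as HV.
  fold Uf in HU. fold Vf in HV.
  pose proof (clamp_lip ((Uf z + Vf z) / 2) ((Uf z' + Vf z') / 2)).
  pose proof (clamp_lip ((Uf z - Vf z) / 2) ((Uf z' - Vf z') / 2)).
  unfold psix, psiy. rabs.
Qed.

Lemma beta_nonneg z : 0 <= beta z.
Proof. unfold beta. apply infM0_ge. intros. pose proof (dnn z (sq X t u)). lra. Qed.

Lemma beta_le z t u : inM0 t u -> beta z <= d z (sq X t u).
Proof. intro H. unfold beta. pose proof (infM0_le _ _ HBb z t u H). simpl in H0. lra. Qed.

Lemma beta_sq t u : inM0 t u -> beta (sq X t u) = 0.
Proof. intro H. pose proof (beta_le (sq X t u) t u H). rewrite d0eq in H0. pose proof (beta_nonneg (sq X t u)). lra. Qed.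

Lemma beta_lip z z' : Rabs (beta z - beta z') <= d z z'.
Proof. apply (infM0_lip_abs _ _ HBb). Qed.

Lemma beta_le2 z : beta z <= 2.
Proof. pose proof (beta_le z 0 0 M0_00). pose proof (dle2 z (sq X 0 0)). lra. Qed.

Lemma beta_approx z eps : 0 < eps -> exists t u, inM0 t u /\ d z (sq X t u) < beta z + eps.
Proof.
  intro He. destruct (infM0_approx _ _ HBb z eps He) as (t & u & H & H'). exists t, u. split; auto.
  unfold beta. lra.
Qed.

Lemma beta_zero z : beta z = 0 -> exists r s, inM0 r s /\ z = sq X r s.
Proof.
  intro H0. exists (psix z), (psiy z).
  assert (HM : inM0 (psix z) (psiy z)).
  { destruct (psi_range z). apply M0_closed; auto.
    intros eps He. destruct (beta_approx z eps He) as (t & u & Ht & Hd).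
    exists t, u. split; auto. unfold L1.
    pose proof (psi_lip z (sq X t u)) as HH. destruct (psi_sq t u Ht) as [E1 E2].
    rewrite E1, E2 in HH. lra. }
  split; auto.
  apply (sq_zero X HX). apply Rle_antisym; [| apply dnn].
  apply le_epsilon'. intros eps He.
  destruct (beta_approx z (Rmin (eps/2) (1/2))) as (t & u & Ht & Hd).
  { apply Rmin_glb_lt; lra. }
  pose proof (Rmin_l (eps/2) (1/2)). pose proof (Rmin_r (eps/2) (1/2)).
  pose proof (psi_lip z (sq X t u)). destruct (psi_sq t u Ht) as [E1 E2]. rewrite E1, E2 in H2.
  assert (HL : L1 t u (psix z) (psiy z) < 1).
  { unfold L1. rewrite (Rabs_minus_sym t), (Rabs_minus_sym u). lra. }
  pose proof (sq_le_L1 t u (psix z) (psiy z) Ht HM HL).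
  pose proof (dtri z (sq X t u) (sq X (psix z) (psiy z))).
  unfold L1 in *. rewrite (Rabs_minus_sym t), (Rabs_minus_sym u) in H3. lra.
Qed.

End Geom.


Lemma toR_range t : 0 <= toR t <= 2.
Proof. destruct t; simpl; lra. Qed.

Definition succ3 (t : three) : three := match t with I0 => I1 | I1 => I2 | I2 => I2 end.

Lemma ncoord_local m1 r : 0 <= r <= 1 ->
  (ncoord ((toR m1 + r) / 3) = m1) \/
  (r = 1 /\ m1 <> I2 /\ ncoord ((toR m1 + r) / 3) = succ3 m1 /\ toR (succ3 m1) = toR m1 + 1).
Proof.
  intro H. destruct (Req_dec r 1) as [->|Hr].
  - destruct m1; unfold ncoord; simpl; repeat destruct Rlt_dec; try lra.
    + right. repeat split; try lra. discriminate.
    + right. repeat split; try lra. discriminate.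
    + left. reflexivity.
  - left. destruct m1; unfold ncoord; simpl; repeat destruct Rlt_dec; try lra; reflexivity.
Qed.

Lemma adjacent_neq m n : adjacent m n -> m <> n.
Proof. intros [[_ H]|[_ H]] ->; rewrite Rminus_diag, Rabs_R0 in H; lra. Qed.

Section NX.
Context (X : SqRaw) (HX : isSquaMS X).
Notation d := (dist X).
Notation E := (eqcl (gen X)).
Notation qd := (qd X).

Definition posx (a : Npre X) := (toR (fst (fst a)) + psix X (snd a)) / 3.
Definition posy (a : Npre X) := (toR (snd (fst a)) + psiy X (snd a)) / 3.

Lemma pos_range a : 0 <= posx a <= 1 /\ 0 <= posy a <= 1.
Proof.
  unfold posx, posy. destruct (psi_range X (snd a)).
  pose proof (toR_range (fst (fst a))). pose proof (toR_range (snd (fst a))).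
  destruct (fst (fst a)), (snd (fst a)); simpl in *; split; lra.
Qed.

Lemma pos_sq n r s : inM0 r s -> posx (n, sq X r s) = (toR (fst n) + r) / 3 /\
                                  posy (n, sq X r s) = (toR (snd n) + s) / 3.
Proof. intro H. unfold posx, posy. simpl. destruct (psi_sq X HX r s H) as [-> ->]. auto. Qed.

Lemma pos_gen a b : gen X a b -> posx a = posx b /\ posy a = posy b.
Proof.
  intros (m & n & r & s & r' & s' & H1 & H2 & H3 & H4 & H5 & -> & ->).
  destruct (pos_sq m r s H1) as [-> ->]. destruct (pos_sq n r' s' H2) as [-> ->]. auto.
Qed.

Lemma pos_step (sx sy : R) a b : Rabs sx = 1 -> Rabs sy = 1 ->
  Rabs ((sx * posx b + sy * posy b) - (sx * posx a + sy * posy a)) <= d0 X a b.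
Proof.
  intros Hx Hy. unfold d0. destruct N_eq_dec as [e|ne].
  - unfold posx, posy. rewrite e. pose proof (psi_lip X HX (snd a) (snd b)).
    assert (Hsx : sx = 1 \/ sx = -1) by rabs. assert (Hsy : sy = 1 \/ sy = -1) by rabs.
    destruct Hsx as [-> | ->]; destruct Hsy as [-> | ->]; rabs.
  - destruct (pos_range a), (pos_range b).
    assert (Hsx : sx = 1 \/ sx = -1) by rabs. assert (Hsy : sy = 1 \/ sy = -1) by rabs.
    destruct Hsx as [-> | ->]; destruct Hsy as [-> | ->]; rabs.
Qed.

Lemma pos_L1 a b : Rabs (posx a - posx b) + Rabs (posy a - posy b) <= qd a b.
Proof.
  assert (forall sx sy, Rabs sx = 1 -> Rabs sy = 1 ->
    Rabs ((sx * posx b + sy * posy b) - (sx * posx a + sy * posy a)) <= qd a b).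
  { intros sx sy Hx Hy.
    apply (potential_abs X HX (fun a => sx * posx a + sy * posy a)).
    - intros u v H. destruct (pos_gen u v H) as [-> ->]. reflexivity.
    - intros u v. apply pos_step; auto.
    - }
  pose proof (H 1 1 ltac:(rabs) ltac:(rabs)). pose proof (H 1 (-1) ltac:(rabs) ltac:(rabs)).
  pose proof (H (-1) 1 ltac:(rabs) ltac:(rabs)). pose proof (H (-1) (-1) ltac:(rabs) ltac:(rabs)).
  rabs.
Qed.

Definition phil (n : N) (z : car X) (a : Npre X) : R :=
  if N_eq_dec (fst a) n then Rmin (d z (snd a)) (beta X z + beta X (snd a)) / 3
  else beta X z / 3.

Lemma phil_gen n z a b : gen X a b -> phil n z a = phil n z b.
Proof.
  intros (m & m' & r & s & r' & s' & H1 & H2 & H3 & H4 & H5 & -> & ->).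
  assert (Hv : forall k t u, inM0 t u -> phil n z (k, sq X t u) = beta X z / 3).
  { intros k t u H. unfold phil. simpl. destruct N_eq_dec; [|reflexivity].
    rewrite beta_sq by auto. rewrite Rplus_0_r.
    pose proof (beta_le X HX z t u H). rewrite Rmin_right by lra. reflexivity. }
  rewrite !Hv; auto.
Qed.

Lemma Rmin_lip a b a' b' D : Rabs (a - a') <= D -> Rabs (b - b') <= D ->
  Rabs (Rmin a b - Rmin a' b') <= D.
Proof. intros. unfold Rmin. repeat destruct Rle_dec; rabs. Qed.

Lemma phil_step n z a b : Rabs (phil n z b - phil n z a) <= d0 X a b.
Proof.
  pose proof (beta_nonneg X HX z) as Bz. pose proof (beta_le2 X HX z) as Bz2.
  pose proof (beta_nonneg X HX (snd a)). pose proof (beta_nonneg X HX (snd b)).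
  pose proof (dist_nonneg X HX z (snd a)). pose proof (dist_nonneg X HX z (snd b)).
  pose proof (sq_bound X HX z (snd a)). pose proof (sq_bound X HX z (snd b)).
  pose proof (Rmin_l (d z (snd a)) (beta X z + beta X (snd a))).
  pose proof (Rmin_l (d z (snd b)) (beta X z + beta X (snd b))).
  pose proof (Rmin_glb (d z (snd a)) (beta X z + beta X (snd a)) 0 ltac:(lra) ltac:(lra)).
  pose proof (Rmin_glb (d z (snd b)) (beta X z + beta X (snd b)) 0 ltac:(lra) ltac:(lra)).
  unfold phil, d0. destruct (N_eq_dec (fst a) (fst b)) as [e|ne].
  - rewrite e. destruct N_eq_dec.
    + assert (Rabs (Rmin (d z (snd b)) (beta X z + beta X (snd b)) -
                    Rmin (d z (snd a)) (beta X z + beta X (snd a))) <= d (snd a) (snd b)).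
      { apply Rmin_lip.
        - pose proof (sq_tri X HX z (snd a) (snd b)). pose proof (sq_tri X HX z (snd b) (snd a)).
          rewrite (sq_sym X HX (snd b) (snd a)) in H10. apply Rabs_le. lra.
        - pose proof (beta_lip X HX (snd b) (snd a)). rewrite (sq_sym X HX) in H9.
          replace (beta X z + beta X (snd b) - (beta X z + beta X (snd a))) with
            (beta X (snd b) - beta X (snd a)) by lra. exact H9. }
      rabs.
    + rewrite Rminus_diag, Rabs_R0. pose proof (dist_nonneg X HX (snd a) (snd b)). lra.
  - destruct (N_eq_dec (fst a) n), (N_eq_dec (fst b) n); rabs.
Qed.

Lemma phil_center n z : phil n z (n, z) = 0.
Proof.
  unfold phil. simpl. destruct N_eq_dec; [|congruence].
  rewrite dist_refl by auto. pose proof (beta_nonneg X HX z).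
  rewrite Rmin_left by lra. lra.
Qed.

Lemma phil_lower n z b : phil n z b <= qd (n, z) b.
Proof.
  pose proof (potential_abs X HX (phil n z) (phil_gen n z) (phil_step n z) (n, z) b).
  rewrite phil_center in H. rabs.
Qed.

Lemma beta_pos_qd0 n z b : 0 < beta X z -> qd (n, z) b = 0 -> b = (n, z).
Proof.
  intros Hb H0. pose proof (phil_lower n z b) as H. rewrite H0 in H. unfold phil in H.
  destruct b as [m w]. simpl in H. destruct N_eq_dec as [->|ne]; [|lra].
  pose proof (beta_nonneg X HX w).
  assert (Hd : d z w <= 0).
  { unfold Rmin in H. destruct Rle_dec; lra. }
  pose proof (dist_nonneg X HX z w).
  assert (d z w = 0) by lra. apply (sq_zero X HX) in H3. subst. reflexivity.
Qed.

Lemma gen_x m1 m2 s : m1 <> I2 -> 0 <= s <= 1 ->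
  gen X ((m1, m2), sq X 1 s) ((succ3 m1, m2), sq X 0 s).
Proof.
  intros Hm Hs. exists (m1, m2), (succ3 m1, m2), 1, s, 0, s.
  assert (H : toR (succ3 m1) = toR m1 + 1) by (destruct m1; simpl; try lra; congruence).
  split; [split; [lra| split; [lra| right; left; reflexivity]]|].
  split; [split; [lra| split; [lra| left; reflexivity]]|].
  split.
  { right. simpl. split; [reflexivity|]. rewrite H. replace (toR m1 - (toR m1 + 1)) with (-1) by lra.
    rabs. }
  split. { simpl. rewrite H. lra. }
  split. { reflexivity. }
  split; reflexivity.
Qed.

Lemma gen_y m1 m2 r : m2 <> I2 -> 0 <= r <= 1 ->
  gen X ((m1, m2), sq X r 1) ((m1, succ3 m2), sq X r 0).
Proof.
  intros Hm Hs. exists (m1, m2), (m1, succ3 m2), r, 1, r, 0.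
  assert (H : toR (succ3 m2) = toR m2 + 1) by (destruct m2; simpl; try lra; congruence).
  split; [split; [lra| split; [lra| right; right; right; reflexivity]]|].
  split; [split; [lra| split; [lra| right; right; left; reflexivity]]|].
  split.
  { left. simpl. split; [reflexivity|]. rewrite H. replace (toR m2 - (toR m2 + 1)) with (-1) by lra.
    rabs. }
  split. { reflexivity. }
  split. { simpl. rewrite H. lra. }
  split; reflexivity.
Qed.

Definition canon (P Q : R) : Npre X :=
  ((ncoord P, ncoord Q), sq X (3 * P - toR (ncoord P)) (3 * Q - toR (ncoord Q))).

Lemma to_canon m r s : inM0 r s ->
  E (m, sq X r s) (canon ((toR (fst m) + r) / 3) ((toR (snd m) + s) / 3)).
Proof.
  intro H. destruct H as (Hr & Hs & Hside). destruct m as [m1 m2]. simpl. unfold canon.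
  destruct (ncoord_local m1 r Hr) as [Ex | (-> & Hm1 & Ex & Tx)];
  destruct (ncoord_local m2 s Hs) as [Ey | (-> & Hm2 & Ey & Ty)];
  rewrite Ex, Ey.
  - replace (3 * ((toR m1 + r) / 3) - toR m1) with r by lra.
    replace (3 * ((toR m2 + s) / 3) - toR m2) with s by lra. apply eqcl_refl.
  - replace (3 * ((toR m1 + r) / 3) - toR m1) with r by lra.
    replace (3 * ((toR m2 + 1) / 3) - toR (succ3 m2)) with 0 by lra.
    apply eqcl_step. apply gen_y; [auto| lra].
  - replace (3 * ((toR m1 + 1) / 3) - toR (succ3 m1)) with 0 by lra.
    replace (3 * ((toR m2 + s) / 3) - toR m2) with s by lra.
    apply eqcl_step. apply gen_x; [auto| lra].
  - replace (3 * ((toR m1 + 1) / 3) - toR (succ3 m1)) with 0 by lra.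
    replace (3 * ((toR m2 + 1) / 3) - toR (succ3 m2)) with 0 by lra.
    eapply eqcl_trans.
    + apply eqcl_step. apply gen_x; [auto| lra].
    + apply eqcl_step. apply gen_y; [auto| lra].
Qed.

Lemma glue m n r s t u : inM0 r s -> inM0 t u ->
  (toR (fst m) + r) / 3 = (toR (fst n) + t) / 3 ->
  (toR (snd m) + s) / 3 = (toR (snd n) + u) / 3 ->
  E (m, sq X r s) (n, sq X t u).
Proof.
  intros H1 H2 Ex Ey. eapply eqcl_trans. apply to_canon; auto.
  rewrite Ex, Ey. apply eqcl_sym. apply to_canon; auto.
Qed.

Lemma qd0_eqcl a b : qd a b = 0 -> E a b.
Proof.
  intro H. destruct a as [n z], b as [m w].
  pose proof (beta_nonneg X HX z). pose proof (beta_nonneg X HX w).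
  destruct (Req_dec (beta X z) 0) as [Bz|Bz].
  - destruct (Req_dec (beta X w) 0) as [Bw|Bw].
    + destruct (beta_zero X HX z Bz) as (r & s & Hrs & ->).
      destruct (beta_zero X HX w Bw) as (t & u & Htu & ->).
      pose proof (pos_L1 (n, sq X r s) (m, sq X t u)). rewrite H in H2.
      destruct (pos_sq n r s Hrs) as [E1 E2]. destruct (pos_sq m t u Htu) as [E3 E4].
      rewrite E1, E2, E3, E4 in H2.
      apply glue; auto.
      * pose proof (Rabs_pos ((toR (snd n) + s) / 3 - (toR (snd m) + u) / 3)). rabs.
      * pose proof (Rabs_pos ((toR (fst n) + r) / 3 - (toR (fst m) + t) / 3)). rabs.
    + rewrite qd_sym in H by auto. apply beta_pos_qd0 in H; [|lra].
      rewrite H. apply eqcl_refl.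
  - apply beta_pos_qd0 in H; [|lra]. rewrite H. apply eqcl_refl.
Qed.

End NX.


Section Thirds.
Context (D : R -> R -> R) (Htri : forall a b c, D a c <= D a b + D b c)
  (Hloc : forall j : three, forall y y', toR j / 3 <= y <= (toR j + 1) / 3 ->
     toR j / 3 <= y' <= (toR j + 1) / 3 -> D y y' <= Rabs (y - y')).

Lemma good_chain a b c : D a b <= Rabs (a - b) -> D b c <= Rabs (b - c) ->
  (a <= b <= c \/ c <= b <= a) -> D a c <= Rabs (a - c).
Proof. intros H1 H2 H3. pose proof (Htri a b c). rabs. Qed.

Lemma L0 y y' : 0 <= y <= 1/3 -> 0 <= y' <= 1/3 -> D y y' <= Rabs (y - y').
Proof. intros. apply (Hloc I0); simpl; lra. Qed.
Lemma L1' y y' : 1/3 <= y <= 2/3 -> 1/3 <= y' <= 2/3 -> D y y' <= Rabs (y - y').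
Proof. intros. apply (Hloc I1); simpl; lra. Qed.
Lemma L2 y y' : 2/3 <= y <= 1 -> 2/3 <= y' <= 1 -> D y y' <= Rabs (y - y').
Proof. intros. apply (Hloc I2); simpl; lra. Qed.

Lemma thirds y y' : 0 <= y <= 1 -> 0 <= y' <= 1 -> D y y' <= Rabs (y - y').
Proof.
  intros Hy Hy'.
  destruct (Rle_dec y (1/3)); [|destruct (Rle_dec y (2/3))];
  (destruct (Rle_dec y' (1/3)); [|destruct (Rle_dec y' (2/3))]).
  - apply L0; lra.
  - apply good_chain with (1/3); [apply L0| apply L1'|]; lra.
  - apply good_chain with (1/3); [apply L0| |lra]; try lra.
    apply good_chain with (2/3); [apply L1'| apply L2|]; lra.
  - apply good_chain with (1/3); [apply L1'| apply L0|]; lra.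
  - apply L1'; lra.
  - apply good_chain with (2/3); [apply L1'| apply L2|]; lra.
  - apply good_chain with (2/3); [apply L2| |lra]; try lra.
    apply good_chain with (1/3); [apply L1'| apply L0|]; lra.
  - apply good_chain with (2/3); [apply L2| apply L1'|]; lra.
  - apply L2; lra.
Qed.
End Thirds.

Ltac side := first [left; lra | right; left; lra | right; right; left; lra | right; right; right; lra].

Section NXsq.
Context (X : SqRaw) (HX : isSquaMS X).
Notation d := (dist X).
Notation E := (eqcl (gen X)).

Lemma canon_pos r s : inM0 r s -> posx X (canon X r s) = r /\ posy X (canon X r s) = s.
Proof.
  intro H. unfold canon. pose proof (ncoord_M0 r s H) as HM.
  unfold posx, posy. simpl. destruct (psi_sq X HX _ _ HM) as [E1 E2]. rewrite E1, E2. split; lra.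
Qed.

Lemma sqN_canon r s : sq (Ntens X) r s = cls (gen X) (canon X r s).
Proof. reflexivity. Qed.

Lemma sqN_lower r s t u : inM0 r s -> inM0 t u ->
  Rabs (r - t) + Rabs (s - u) <= dist (Ntens X) (sq (Ntens X) r s) (sq (Ntens X) t u).
Proof.
  intros H1 H2. rewrite !sqN_canon, Ndist_cls by auto.
  pose proof (pos_L1 X HX (canon X r s) (canon X t u)).
  destruct (canon_pos r s H1) as [E1 E2]. destruct (canon_pos t u H2) as [E3 E4].
  rewrite E1, E2, E3, E4 in H. exact H.
Qed.

Lemma sqN_cell r s (n : N) : inM0 r s ->
  inM0 (3 * r - toR (fst n)) (3 * s - toR (snd n)) ->
  sq (Ntens X) r s = cls (gen X) (n, sq X (3 * r - toR (fst n)) (3 * s - toR (snd n))).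
Proof.
  intros H1 H2. rewrite sqN_canon. apply cls_eq. unfold canon.
  apply glue; auto. apply ncoord_M0; auto. simpl; lra. simpl; lra.
Qed.

Lemma third_loc (j : three) y : toR j / 3 <= y <= (toR j + 1) / 3 -> 0 <= 3 * y - toR j <= 1.
Proof. intro. lra. Qed.

Lemma Ntri a b c : dist (Ntens X) a c <= dist (Ntens X) a b + dist (Ntens X) b c.
Proof. rewrite !Ndist_rep. apply qd_tri; auto. Qed.

Lemma loc_bound (n : N) a b a' b' : inM0 a b -> inM0 a' b' ->
  dist (Ntens X) (cls (gen X) (n, sq X a b)) (cls (gen X) (n, sq X a' b')) <=
  d (sq X a b) (sq X a' b') / 3.
Proof. intros. rewrite Ndist_cls by auto. apply qd_le_same; auto. Qed.

Lemma sqN_vert i r s : (i = 0 \/ i = 1) -> 0 <= r <= 1 -> 0 <= s <= 1 ->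
  dist (Ntens X) (sq (Ntens X) i r) (sq (Ntens X) i s) <= Rabs (r - s).
Proof.
  intros Hi Hr Hs.
  apply (thirds (fun r s => dist (Ntens X) (sq (Ntens X) i r) (sq (Ntens X) i s))); auto.
  - intros. apply Ntri.
  - intros j y y' Hy Hy'.
    assert (HM : forall y, toR j / 3 <= y <= (toR j + 1) / 3 -> inM0 i y /\
        inM0 (3 * i - toR (ncoord i)) (3 * y - toR j) /\ 0 <= y <= 1).
    { intros z Hz. pose proof (toR_range j).
      destruct Hi as [-> | ->]; [rewrite ncoord_0| rewrite ncoord_1]; simpl;
      (split; [split; [lra| split; [lra| side]]|]);
      (split; [split; [lra| split; [lra| side]]| lra]). }
    destruct (HM y Hy) as (A1 & A2 & A3). destruct (HM y' Hy') as (B1 & B2 & B3).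
    rewrite (sqN_cell i y (ncoord i, j)) by auto. rewrite (sqN_cell i y' (ncoord i, j)) by auto.
    simpl. eapply Rle_trans. apply loc_bound; auto.
    assert (Hx : 3 * i - toR (ncoord i) = 0 \/ 3 * i - toR (ncoord i) = 1).
    { destruct Hi as [-> | ->]; [rewrite ncoord_0| rewrite ncoord_1]; simpl; lra. }
    destruct Hx as [Hx|Hx]; rewrite Hx; [rewrite sideL| rewrite sideR]; auto; try lra; rabs.
Qed.

Lemma sqN_horz i r s : (i = 0 \/ i = 1) -> 0 <= r <= 1 -> 0 <= s <= 1 ->
  dist (Ntens X) (sq (Ntens X) r i) (sq (Ntens X) s i) <= Rabs (r - s).
Proof.
  intros Hi Hr Hs.
  apply (thirds (fun r s => dist (Ntens X) (sq (Ntens X) r i) (sq (Ntens X) s i))); auto.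
  - intros. apply Ntri.
  - intros j y y' Hy Hy'.
    assert (HM : forall y, toR j / 3 <= y <= (toR j + 1) / 3 -> inM0 y i /\
        inM0 (3 * y - toR j) (3 * i - toR (ncoord i)) /\ 0 <= y <= 1).
    { intros z Hz. pose proof (toR_range j).
      destruct Hi as [-> | ->]; [rewrite ncoord_0| rewrite ncoord_1]; simpl;
      (split; [split; [lra| split; [lra| side]]|]);
      (split; [split; [lra| split; [lra| side]]| lra]). }
    destruct (HM y Hy) as (A1 & A2 & A3). destruct (HM y' Hy') as (B1 & B2 & B3).
    rewrite (sqN_cell y i (j, ncoord i)) by auto. rewrite (sqN_cell y' i (j, ncoord i)) by auto.
    simpl. eapply Rle_trans. apply loc_bound; auto.
    assert (Hx : 3 * i - toR (ncoord i) = 0 \/ 3 * i - toR (ncoord i) = 1).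
    { destruct Hi as [-> | ->]; [rewrite ncoord_0| rewrite ncoord_1]; simpl; lra. }
    destruct Hx as [Hx|Hx]; rewrite Hx; [rewrite sideB| rewrite sideT]; auto; try lra; rabs.
Qed.

Lemma Ntens_SquaMS : isSquaMS (Ntens X).
Proof.
  constructor.
  - intros c c'. split.
    + intro H. rewrite <- (cls_rep _ c), <- (cls_rep _ c'). apply cls_eq.
      apply qd0_eqcl; auto.
    + intros ->. rewrite Ndist_rep. apply qd_eqcl0; auto. apply eqcl_refl.
  - intros. rewrite !Ndist_rep. apply qd_sym; auto.
  - intros. apply Ntri.
  - intros. rewrite Ndist_rep. apply qd_le2; auto.
  - intros r s r' s' H1 H2 H. pose proof (sqN_lower r s r' s' H1 H2). rewrite H in H0.
    assert (dist (Ntens X) (sq (Ntens X) r' s') (sq (Ntens X) r' s') = 0).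
    { rewrite Ndist_rep. apply qd_eqcl0; auto. apply eqcl_refl. }
    rewrite H3 in H0. pose proof (Rabs_pos (r - r')). pose proof (Rabs_pos (s - s')).
    split; rabs.
  - intros i r s Hi Hr Hs.
    assert (Hi' : inM0 i r /\ inM0 i s /\ inM0 r i /\ inM0 s i).
    { destruct Hi as [-> | ->]; repeat split; try lra; side. }
    destruct Hi' as (A & B & C & D).
    split; apply Rle_antisym.
    + rewrite Rabs_minus_sym. apply sqN_vert; auto.
    + pose proof (sqN_lower i r i s A B). rewrite Rminus_diag, Rabs_R0 in H.
      rewrite Rabs_minus_sym. lra.
    + rewrite Rabs_minus_sym. apply sqN_horz; auto.
    + pose proof (sqN_lower r i s i C D). rewrite Rminus_diag, Rabs_R0 in H.
      rewrite Rabs_minus_sym. lra.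
  - intros r s t u H1 H2. apply Rle_ge. apply sqN_lower; auto.
Qed.

End NXsq.


Definition tp (k : nat) : R := (/ 3) ^ k.
Lemma tp_pos k : 0 < tp k. Proof. unfold tp. apply pow_lt. lra. Qed.
Lemma tp_S k : tp (S k) = tp k / 3. Proof. unfold tp. simpl. lra. Qed.
Lemma tp_small eps : 0 < eps -> exists K, forall k, (K <= k)%nat -> tp k < eps.
Proof.
  intro He. destruct (pow_lt_1_zero (/3) ltac:(rewrite Rabs_pos_eq; lra) eps He) as [K HK].
  exists K. intros k Hk. specialize (HK k Hk). unfold tp. rewrite Rabs_pos_eq in HK; auto.
  apply pow_le. lra.
Qed.
Lemma tp_mono k m : (k <= m)%nat -> tp m <= tp k.
Proof.
  induction 1. lra. rewrite tp_S. pose proof (tp_pos m). lra.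
Qed.

Lemma le_all_tp x c : (forall k, x <= c * tp k) -> x <= 0.
Proof.
  intro H. apply le_epsilon'. intros eps He.
  destruct (Rle_dec c 0).
  - specialize (H 0%nat). unfold tp in H. simpl in H. lra.
  - destruct (tp_small (eps / c)) as [K HK]. apply Rdiv_lt_0_compat; lra.
    specialize (HK K (le_n K)). specialize (H K).
    assert (c * tp K < eps).
    { apply (Rmult_lt_compat_l c) in HK; [|lra]. field_simplify in HK; lra. }
    lra.
Qed.

Section Compl.
Context (X : SqRaw) (HX : isSquaMS X).
Notation d := (dist X).
Notation C := (Compl X HX).

Lemma dnn' x y : 0 <= d x y. Proof. apply dist_nonneg; auto. Qed.
Lemma dtri' x y z : d x z <= d x y + d y z. Proof. apply (sq_tri X HX). Qed.
Lemma dsym' x y : d x y = d y x. Proof. apply (sq_sym X HX). Qed.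

Definition sq_of (a : CS X) : nat -> car X := proj1_sig a.

Lemma dseq_cauchy (a b : CS X) : Cauchy_crit (fun k => d (sq_of a k) (sq_of b k)).
Proof.
  intros eps He. destruct (proj2_sig a (eps/2) ltac:(lra)) as [N1 H1].
  destruct (proj2_sig b (eps/2) ltac:(lra)) as [N2 H2].
  exists (max N1 N2). intros n m Hn Hm. unfold Rdist.
  specialize (H1 n m ltac:(lia) ltac:(lia)). specialize (H2 n m ltac:(lia) ltac:(lia)).
  unfold sq_of in *.
  pose proof (dtri' (proj1_sig a n) (proj1_sig a m) (proj1_sig b n)).
  pose proof (dtri' (proj1_sig a m) (proj1_sig b m) (proj1_sig b n)).
  pose proof (dtri' (proj1_sig a m) (proj1_sig a n) (proj1_sig b m)).
  pose proof (dtri' (proj1_sig a n) (proj1_sig b n) (proj1_sig b m)).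
  rewrite (dsym' (proj1_sig b m) (proj1_sig b n)) in *.
  rewrite (dsym' (proj1_sig a m) (proj1_sig a n)) in *.
  rabs.
Qed.

Definition DD (a b : CS X) : R := real (Lim_seq (fun k => d (sq_of a k) (sq_of b k))).

Lemma DD_spec a b : Un_cv (fun k => d (sq_of a k) (sq_of b k)) (DD a b).
Proof.
  destruct (Rcomplete.R_complete _ (dseq_cauchy a b)) as [l Hl].
  unfold DD. rewrite (is_lim_seq_unique _ l). simpl. exact Hl.
  apply is_lim_seq_Reals. exact Hl.
Qed.

Lemma DD_le a b B : (forall eps, 0 < eps -> exists N, forall k, (N <= k)%nat ->
   d (sq_of a k) (sq_of b k) <= B + eps) -> DD a b <= B.
Proof.
  intro H. apply le_epsilon'. intros eps He.
  destruct (H (eps/2) ltac:(lra)) as [N1 H1].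
  destruct (DD_spec a b (eps/2) ltac:(lra)) as [N2 H2].
  specialize (H1 (max N1 N2) ltac:(lia)). specialize (H2 (max N1 N2) ltac:(lia)).
  unfold R_dist in H2. rabs.
Qed.

Lemma DD_ge a b B : (forall eps, 0 < eps -> exists N, forall k, (N <= k)%nat ->
   B - eps <= d (sq_of a k) (sq_of b k)) -> B <= DD a b.
Proof.
  intro H. apply le_epsilon'. intros eps He.
  destruct (H (eps/2) ltac:(lra)) as [N1 H1].
  destruct (DD_spec a b (eps/2) ltac:(lra)) as [N2 H2].
  specialize (H1 (max N1 N2) ltac:(lia)). specialize (H2 (max N1 N2) ltac:(lia)).
  unfold R_dist in H2. rabs.
Qed.

Lemma DD_near a b eps : 0 < eps -> exists N, forall k, (N <= k)%nat ->
  Rabs (d (sq_of a k) (sq_of b k) - DD a b) < eps.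
Proof. intro He. destruct (DD_spec a b eps He) as [N H]. exists N. exact H. Qed.

Lemma DD_nonneg a b : 0 <= DD a b.
Proof. apply DD_ge. intros. exists 0%nat. intros. pose proof (dnn' (sq_of a k) (sq_of b k)). lra. Qed.

Lemma DD_sym a b : DD a b = DD b a.
Proof.
  apply Rle_antisym; apply DD_le; intros eps He.
  - destruct (DD_near b a eps He) as [N H]; exists N; intros k Hk; specialize (H k Hk).
    rewrite dsym' in H; rabs.
  - destruct (DD_near a b eps He) as [N H]; exists N; intros k Hk; specialize (H k Hk).
    rewrite dsym' in H; rabs.
Qed.

Lemma DD_tri a b c : DD a c <= DD a b + DD b c.
Proof.
  apply DD_le. intros eps He.
  destruct (DD_near a b (eps/2) ltac:(lra)) as [N1 H1].
  destruct (DD_near b c (eps/2) ltac:(lra)) as [N2 H2].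
  exists (max N1 N2). intros k Hk. specialize (H1 k ltac:(lia)). specialize (H2 k ltac:(lia)).
  pose proof (dtri' (sq_of a k) (sq_of b k) (sq_of c k)). rabs.
Qed.

Lemma crel_DD a b : crel X a b <-> DD a b = 0.
Proof.
  unfold crel. split; intro H.
  - apply is_lim_seq_Reals in H. unfold DD. rewrite (is_lim_seq_unique _ 0). reflexivity.
    apply is_lim_seq_Reals. exact H.
  - apply is_lim_seq_Reals. pose proof (DD_spec a b). rewrite H in H0. exact H0.
Qed.

Lemma eqcl_crel a b : eqcl (crel X) a b -> DD a b = 0.
Proof.
  intro H. induction H.
  - apply crel_DD; auto.
  - apply Rle_antisym; [|apply DD_nonneg]. apply DD_le. intros. exists 0%nat. intros.
    rewrite dist_refl; auto. lra.
  - rewrite DD_sym; auto.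
  - apply Rle_antisym; [|apply DD_nonneg]. pose proof (DD_tri x y z). lra.
Qed.

Lemma DD_crel_l a a' b : DD a a' = 0 -> DD a b = DD a' b.
Proof.
  intro H. pose proof (DD_tri a a' b). pose proof (DD_tri a' a b). assert (DD a' a = 0) by (rewrite DD_sym; auto). lra.
Qed.

Lemma distC_cls a b : dist C (cls (crel X) a) (cls (crel X) b) = DD a b.
Proof.
  change (DD (rep (cls (crel X) a)) (rep (cls (crel X) b)) = DD a b).
  rewrite (DD_crel_l _ a). rewrite DD_sym, (DD_sym _ b). apply DD_crel_l.
  apply eqcl_crel. apply rep_cls. apply eqcl_crel. apply rep_cls.
Qed.

Lemma distC_rep A B : dist C A B = DD (rep A) (rep B).
Proof. reflexivity. Qed.

Definition emb (x : car X) : car C :=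
  cls (crel X) (exist _ (fun _ => x) (const_cauchy X HX x)).

Lemma sqC r s : sq C r s = emb (sq X r s). Proof. reflexivity. Qed.

Lemma DD_const x y : DD (exist _ (fun _ => x) (const_cauchy X HX x)) (exist _ (fun _ => y) (const_cauchy X HX y)) = d x y.
Proof.
  apply Rle_antisym; [apply DD_le| apply DD_ge]; intros; exists 0%nat; intros; unfold sq_of; simpl; lra.
Qed.

Lemma distC_emb x y : dist C (emb x) (emb y) = d x y.
Proof. unfold emb. rewrite distC_cls. apply DD_const. Qed.

Lemma C_SquaMS : isSquaMS C.
Proof.
  constructor.
  - intros A B. split.
    + intro H. rewrite <- (cls_rep _ A), <- (cls_rep _ B). apply cls_eq. apply eqcl_step.
      apply crel_DD. exact H.
    + intros ->. rewrite distC_rep. apply eqcl_crel. apply eqcl_refl.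
  - intros. rewrite !distC_rep. apply DD_sym.
  - intros. rewrite !distC_rep. apply DD_tri.
  - intros. rewrite distC_rep. apply DD_le. intros. exists 0%nat. intros.
    pose proof (sq_bound X HX (sq_of (rep x) k) (sq_of (rep y) k)). lra.
  - intros r s r' s' H1 H2 H. rewrite !sqC in H. unfold emb in H.
    apply cls_inj in H. apply eqcl_crel in H. rewrite DD_const in H.
    apply (sq_zero X HX) in H. apply (sq_inj X HX); auto.
  - intros i r s Hi Hr Hs. rewrite !sqC, !distC_emb. apply (sq1 X HX); auto.
  - intros. rewrite !sqC, !distC_emb. apply (sq2 X HX); auto.
Qed.

Lemma distC_nonneg A B : 0 <= dist C A B.
Proof. apply dist_nonneg. apply C_SquaMS. Qed.
Lemma distC_tri A B D : dist C A D <= dist C A B + dist C B D.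
Proof. apply (sq_tri C C_SquaMS). Qed.
Lemma distC_sym A B : dist C A B = dist C B A.
Proof. apply (sq_sym C C_SquaMS). Qed.

Lemma emb_near (a : CS X) eps : 0 < eps -> exists N, forall k, (N <= k)%nat ->
  dist C (cls (crel X) a) (emb (sq_of a k)) <= eps.
Proof.
  intro He. destruct (proj2_sig a eps He) as [N H]. exists N. intros k Hk.
  unfold emb. rewrite distC_cls. apply DD_le. intros e' He'. exists N. intros m Hm.
  unfold sq_of at 2. simpl. specialize (H m k Hm Hk). unfold sq_of. lra.
Qed.

Lemma rep_near (A : car C) eps : 0 < eps -> exists N, forall k, (N <= k)%nat ->
  dist C A (emb (sq_of (rep A) k)) <= eps.
Proof.
  intro He. destruct (emb_near (rep A) eps He) as [N H]. exists N. intros k Hk.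
  specialize (H k Hk). rewrite cls_rep in H. exact H.
Qed.

Lemma mkC_cls (u : nat -> car X) (H : cauchy d u) : mkC X HX u = cls (crel X) (exist _ u H).
Proof.
  unfold mkC. destruct excluded_middle_informative as [H'|H'].
  - f_equal. f_equal. apply proof_irrelevance.
  - contradiction.
Qed.

Lemma mkC_const x : mkC X HX (fun _ => x) = emb x.
Proof. apply mkC_cls. Qed.

Lemma complete (a : nat -> car C) (e : nat -> R)
  (He : forall eps, 0 < eps -> exists K, forall k, (K <= k)%nat -> e k < eps)
  (H : forall k m, (k <= m)%nat -> dist C (a k) (a m) <= e k) :
  exists l, forall k, dist C (a k) l <= e k.
Proof.
  assert (Hz : forall k, exists x, dist C (a k) (emb x) <= tp k).
  { intro k. destruct (rep_near (a k) (tp k) (tp_pos k)) as [N HN]. eexists. apply (HN N). lia. }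
  destruct (choice _ Hz) as [z Hzk].
  assert (Hdz : forall k m, (k <= m)%nat -> d (z k) (z m) <= tp k + e k + tp m).
  { intros k m Hkm. rewrite <- distC_emb.
    pose proof (distC_tri (emb (z k)) (a k) (emb (z m))).
    pose proof (distC_tri (a k) (a m) (emb (z m))).
    rewrite (distC_sym (emb (z k)) (a k)) in H0. specialize (Hzk k) as H2. specialize (Hzk m) as H3.
    specialize (H k m Hkm). lra. }
  assert (Hc : cauchy d z).
  { intros eps Heps. destruct (tp_small (eps/3) ltac:(lra)) as [K1 HK1].
    destruct (He (eps/3) ltac:(lra)) as [K2 HK2]. exists (max K1 K2).
    intros m n Hm Hn. destruct (Nat.le_ge_cases m n) as [Hmn|Hmn].
    - specialize (Hdz m n Hmn). specialize (HK1 m ltac:(lia)) as A. specialize (HK1 n ltac:(lia)) as B.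
      specialize (HK2 m ltac:(lia)). lra.
    - specialize (Hdz n m Hmn). rewrite dsym' in Hdz.
      specialize (HK1 m ltac:(lia)) as A. specialize (HK1 n ltac:(lia)) as B.
      specialize (HK2 n ltac:(lia)). lra. }
  exists (cls (crel X) (exist _ z Hc)). intro k.
  apply le_epsilon'. intros eps Heps.
  destruct (emb_near (exist _ z Hc) (eps/2) ltac:(lra)) as [N1 HN1].
  destruct (tp_small (eps/2) ltac:(lra)) as [N2 HN2].
  set (m := max k (max N1 N2)).
  specialize (HN1 m ltac:(lia)). specialize (HN2 m ltac:(lia)). change (sq_of (exist _ z Hc) m) with (z m) in HN1.
  pose proof (distC_tri (a k) (a m) (cls (crel X) (exist (cauchy d) z Hc))).
  pose proof (distC_tri (a m) (emb (z m)) (cls (crel X) (exist (cauchy d) z Hc))).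
  rewrite (distC_sym (emb (z m))) in H1.
  specialize (H k m ltac:(lia)). specialize (Hzk m). lra.
Qed.

End Compl.

Section Lambek.
Context (W : SqRaw) (HW : isSquaMS W) (lam : car (Ntens W) -> car W)
  (Hlam : is_morph (Ntens W) W lam)
  (Hinit : forall Y : SqRaw, isSquaMS Y ->
     forall mu : car (Ntens Y) -> car Y, is_morph (Ntens Y) Y mu ->
     exists! g : car W -> car Y,
       is_morph W Y g /\ forall c, g (lam c) = mu (Ntens_map W Y g c)).

Lemma lambek : exists g : car W -> car (Ntens W), is_morph W (Ntens W) g /\
  (forall x, lam (g x) = x) /\ (forall c, g (lam c) = c).
Proof.
  pose proof (Ntens_SquaMS W HW) as HNW.
  pose proof (Nmap_morph (Ntens W) W HNW HW lam Hlam) as Hmu.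
  destruct (Hinit (Ntens W) HNW _ Hmu) as [g [[Hg Hgeq] _]].
  destruct (Hinit W HW lam Hlam) as [g0 [_ Huniq]].
  assert (Hlg : (fun x => lam (g x)) = (fun x => x)).
  { transitivity g0; [symmetry| ]; apply Huniq.
    - split. apply morph_comp'; auto. intro c.
      rewrite Hgeq. rewrite (Nmap_comp W (Ntens W) W g lam Hg Hlam). reflexivity.
    - split. apply morph_id; auto. intro c. rewrite Nmap_id. reflexivity. }
  exists g. split; [auto|]. split.
  - intro x. exact (f_equal (fun f => f x) Hlg).
  - intro c. rewrite Hgeq. rewrite <- (Nmap_comp W (Ntens W) W g lam Hg Hlam).
    rewrite Hlg. apply Nmap_id.
Qed.

Lemma lam_iso : exists g : car W -> car (Ntens W), is_morph W (Ntens W) g /\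
  (forall x, lam (g x) = x) /\ (forall c, g (lam c) = c) /\
  (forall a b, dist W (lam a) (lam b) = dist (Ntens W) a b).
Proof.
  destruct lambek as (g & Hg & H1 & H2). exists g. split; [auto| split; [auto| split; [auto|]]].
  intros a b. apply Rle_antisym. apply (proj1 Hlam).
  pose proof (proj1 Hg (lam a) (lam b)) as H. rewrite !H2 in H. exact H.
Qed.
End Lambek.


Definition Complete (X : SqRaw) : Prop :=
  forall u : nat -> car X, cauchy (dist X) u ->
  exists l, forall eps, 0 < eps -> exists N, forall k, (N <= k)%nat -> dist X (u k) l < eps.

Lemma choice_nat {A : Type} (P : nat -> A -> Prop) : (forall n, exists a, P n a) -> exists f, forall n, P n (f n).
Proof. intro H. apply (choice P H). Qed.

Fixpoint runmax (f : nat -> nat) (j : nat) : nat :=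
  match j with O => f O | S j' => max (runmax f j') (f j) end.
Lemma runmax_ge f j : (f j <= runmax f j)%nat.
Proof. destruct j; simpl; lia. Qed.
Lemma runmax_mono f j k : (j <= k)%nat -> (runmax f j <= runmax f k)%nat.
Proof. induction 1; simpl; lia. Qed.

Lemma C_Complete X HX : Complete (Compl X HX).
Proof.
  intros u Hu.
  assert (HN : forall j, exists N, forall m n, (N <= m)%nat -> (N <= n)%nat -> dist (Compl X HX) (u m) (u n) < tp j).
  { intro j. apply Hu. apply tp_pos. }
  destruct (choice_nat _ HN) as [Nf HNf].
  set (M := runmax Nf).
  destruct (complete X HX (fun j => u (M j)) tp) as [l Hl].
  - apply tp_small.
  - intros k m Hkm. left. apply HNf.
    + apply (Nat.le_trans _ _ _ (runmax_ge Nf k)). apply Nat.le_refl.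
    + apply (Nat.le_trans _ _ _ (runmax_ge Nf k)). apply runmax_mono. exact Hkm.
  - exists l. intros eps He. destruct (tp_small (eps/2) ltac:(lra)) as [J HJ].
    exists (M J). intros k Hk.
    pose proof (distC_tri X HX (u k) (u (M J)) l).
    specialize (HNf J k (M J)). specialize (Hl J). specialize (HJ J (le_n J)).
    assert (dist (Compl X HX) (u k) (u (M J)) < tp J).
    { apply HNf. apply (Nat.le_trans _ (M J)); [apply runmax_ge| exact Hk]. apply runmax_ge. }
    lra.
Qed.

Definition allN : list N :=
  (I0,I0)::(I0,I1)::(I0,I2)::(I1,I0)::(I1,I1)::(I1,I2)::(I2,I0)::(I2,I1)::(I2,I2)::nil.
Lemma in_allN n : In n allN.
Proof. destruct n as [[] []]; simpl; tauto. Qed.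

Lemma pigeon (f : nat -> N) : exists n, forall K, exists k, (K <= k)%nat /\ f k = n.
Proof.
  apply NNPP. intro H.
  assert (H' : forall n, exists K, forall k, (K <= k)%nat -> f k <> n).
  { intro n. apply NNPP. intro H1. apply H. exists n. intro K. apply NNPP. intro H2.
    apply H1. exists K. intros k Hk Hfk. apply H2. exists k. auto. }
  destruct (choice _ H') as [Kf HK].
  set (K := fold_right (fun n acc => max (Kf n) acc) 0%nat allN).
  assert (HKn : forall n, In n allN -> (Kf n <= K)%nat).
  { unfold K. induction allN as [|m l IH]; simpl. tauto.
    intros n [->|Hn]. lia. specialize (IH n Hn). lia. }
  apply (HK (f K) K). apply HKn. apply in_allN. reflexivity.
Qed.

Lemma lim_in01 (r : nat -> R) l : Un_cv r l -> (forall i, 0 <= r i <= 1) -> 0 <= l <= 1.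
Proof.
  intros H Hr. split.
  - apply Rnot_lt_le. intro Hl. destruct (H (- l) ltac:(lra)) as [N HN].
    specialize (HN N (le_n N)). specialize (Hr N). unfold R_dist in HN. rabs.
  - apply Rnot_lt_le. intro Hl. destruct (H (l - 1) ltac:(lra)) as [N HN].
    specialize (HN N (le_n N)). specialize (Hr N). unfold R_dist in HN. rabs.
Qed.

Section NXC.
Context (X : SqRaw) (HX : isSquaMS X) (HC : Complete X).
Notation d := (dist X).

Lemma NX_Complete : Complete (Ntens X).
Proof.
  intros c Hc.
  destruct (pigeon (fun k => fst (rep (c k)))) as [n Hn].
  destruct (choice_nat (fun j k => (j <= k)%nat /\ fst (rep (c k)) = n) Hn) as [s Hs].
  set (v := fun j => snd (rep (c (s j)))).
  assert (Hb : forall j, rep (c (s j)) = (n, v j)).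
  { intro j. destruct (Hs j) as [_ E]. rewrite <- E. apply surjective_pairing. }
  assert (Hqb : forall i j, qd X (n, v i) (n, v j) = dist (Ntens X) (c (s i)) (c (s j))).
  { intros i j. rewrite Ndist_rep, !Hb. reflexivity. }
  assert (Hsj : forall j, (j <= s j)%nat) by (intro j; apply (Hs j)).
  assert (Key : exists L, forall eps, 0 < eps -> exists J, forall j, (J <= j)%nat -> qd X (n, v j) L < eps).
  { destruct (classic (exists delta, 0 < delta /\ exists J, forall j, (J <= j)%nat -> delta <= beta X (v j)))
      as [(delta & Hd & J & HJ) | HB].
    -
      assert (Hv : cauchy d v).
      { intros eps He. set (e' := Rmin eps (2 * delta)).
        assert (He' : 0 < e') by (apply Rmin_glb_lt; lra).
        destruct (Hc (e'/3) ltac:(lra)) as [K HK]. exists (max J K). intros i j Hi Hj.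
        pose proof (phil_lower X HX n (v i) (n, v j)) as Hp. unfold phil in Hp. simpl in Hp.
        destruct N_eq_dec; [|congruence].
        rewrite Hqb in Hp. specialize (HK (s i) (s j)).
        assert (dist (Ntens X) (c (s i)) (c (s j)) < e' / 3).
        { apply HK; eapply Nat.le_trans; [| apply Hsj| |apply Hsj]; lia. }
        pose proof (HJ i ltac:(lia)). pose proof (HJ j ltac:(lia)).
        pose proof (Rmin_l eps (2 * delta)) as M1. pose proof (Rmin_r eps (2 * delta)) as M2. fold e' in M1, M2.
        unfold Rmin in Hp at 1. destruct Rle_dec; lra. }
      destruct (HC v Hv) as [x Hx]. exists (n, x). intros eps He.
      destruct (Hx eps He) as [N HN]. exists N. intros j Hj.
      pose proof (qd_le_same X HX n (v j) x). specialize (HN j Hj).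
      pose proof (dist_nonneg X HX (v j) x). lra.
    -
      assert (Ht : forall i, exists j, (i <= j)%nat /\ beta X (v j) < tp i).
      { intro i. apply NNPP. intro H1. apply HB. exists (tp i). split. apply tp_pos.
        exists i. intros j Hj. apply Rnot_lt_le. intro H2. apply H1. exists j. auto. }
      destruct (choice_nat _ Ht) as [t Htt].
      assert (Hp : forall i, exists p : R * R, inM0 (fst p) (snd p) /\ d (v (t i)) (sq X (fst p) (snd p)) < 2 * tp i).
      { intro i. destruct (beta_approx X HX (v (t i)) (tp i) (tp_pos i)) as (a & b & Hab & Hd).
        exists (a, b). simpl. destruct (Htt i). split; auto. lra. }
      destruct (choice_nat _ Hp) as [pf Hpf].
      set (r := fun i => fst (pf i)). set (q := fun i => snd (pf i)).
      assert (HM : forall i, inM0 (r i) (q i)) by (intro i; apply (Hpf i)).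
      assert (Hti : forall i, (i <= t i)%nat) by (intro i; apply (Htt i)).
      assert (Hclose : forall i, qd X (n, v (t i)) (n, sq X (r i) (q i)) <= 2 * tp i / 3).
      { intro i. pose proof (qd_le_same X HX n (v (t i)) (sq X (r i) (q i))). destruct (Hpf i). 
        unfold r, q in *. lra. }
      assert (HL1 : forall i k, Rabs (r i - r k) + Rabs (q i - q k) <=
         3 * (2 * tp i / 3 + dist (Ntens X) (c (s (t i))) (c (s (t k))) + 2 * tp k / 3)).
      { intros i k. pose proof (pos_L1 X HX (n, sq X (r i) (q i)) (n, sq X (r k) (q k))) as H.
        destruct (pos_sq X HX n _ _ (HM i)) as [E1 E2]. destruct (pos_sq X HX n _ _ (HM k)) as [E3 E4].
        rewrite E1, E2, E3, E4 in H.
        pose proof (qd_tri X HX (n, sq X (r i) (q i)) (n, v (t i)) (n, sq X (r k) (q k))).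
        pose proof (qd_tri X HX (n, v (t i)) (n, v (t k)) (n, sq X (r k) (q k))).
        rewrite Hqb in H1. rewrite (qd_sym X HX (n, sq X (r i) (q i)) (n, v (t i))) in H0.
        pose proof (Hclose i). pose proof (Hclose k).
        assert (Rabs ((toR (fst n) + r i) / 3 - (toR (fst n) + r k) / 3) = Rabs (r i - r k) / 3).
        { replace ((toR (fst n) + r i) / 3 - (toR (fst n) + r k) / 3) with ((r i - r k) / 3) by lra.
          rewrite Rabs_div by lra. rewrite (Rabs_pos_eq 3) by lra. reflexivity. }
        assert (Rabs ((toR (snd n) + q i) / 3 - (toR (snd n) + q k) / 3) = Rabs (q i - q k) / 3).
        { replace ((toR (snd n) + q i) / 3 - (toR (snd n) + q k) / 3) with ((q i - q k) / 3) by lra.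
          rewrite Rabs_div by lra. rewrite (Rabs_pos_eq 3) by lra. reflexivity. }
        lra. }
      assert (Hcau : forall eps, 0 < eps -> exists M, forall i k, (M <= i)%nat -> (M <= k)%nat ->
                Rabs (r i - r k) + Rabs (q i - q k) < eps).
      { intros eps He. destruct (tp_small (eps/8) ltac:(lra)) as [I HI].
        destruct (Hc (eps/12) ltac:(lra)) as [K HK]. exists (max I K). intros i k Hi Hk.
        specialize (HL1 i k). pose proof (HI i ltac:(lia)). pose proof (HI k ltac:(lia)).
        assert (dist (Ntens X) (c (s (t i))) (c (s (t k))) < eps / 12).
        { apply HK. apply (Nat.le_trans _ (t i)); [|apply Hsj]. apply (Nat.le_trans _ i); [lia|apply Hti].
          apply (Nat.le_trans _ (t k)); [|apply Hsj]. apply (Nat.le_trans _ k); [lia|apply Hti]. }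
        lra. }
      assert (Cr : Cauchy_crit r).
      { intros eps He. destruct (Hcau eps He) as [M HM']. exists M. intros i k Hi Hk.
        specialize (HM' i k Hi Hk). unfold Rdist. pose proof (Rabs_pos (q i - q k)). lra. }
      assert (Cq : Cauchy_crit q).
      { intros eps He. destruct (Hcau eps He) as [M HM']. exists M. intros i k Hi Hk.
        specialize (HM' i k Hi Hk). unfold Rdist. pose proof (Rabs_pos (r i - r k)). lra. }
      destruct (Rcomplete.R_complete r Cr) as [rs Hrs].
      destruct (Rcomplete.R_complete q Cq) as [qs Hqs].
      assert (Hnear : forall eps, 0 < eps -> exists I, forall i, (I <= i)%nat -> L1 rs qs (r i) (q i) < eps).
      { intros eps He. destruct (Hrs (eps/2) ltac:(lra)) as [I1 H1].
        destruct (Hqs (eps/2) ltac:(lra)) as [I2 H2]. exists (max I1 I2). intros i Hi.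
        specialize (H1 i ltac:(lia)). specialize (H2 i ltac:(lia)). unfold R_dist in *. unfold L1. rabs. }
      assert (HMs : inM0 rs qs).
      { apply M0_closed.
        - apply (lim_in01 r); auto. intro i. destruct (HM i) as (A & _). auto.
        - apply (lim_in01 q); auto. intro i. destruct (HM i) as (_ & A & _). auto.
        - intros eps He. destruct (Hnear eps He) as [I HI]. exists (r I), (q I). split; auto. }
      exists (n, sq X rs qs). intros eps He.
      destruct (tp_small (eps/8) ltac:(lra)) as [I1 HI1].
      destruct (Hnear (Rmin 1 (eps/4)) ltac:(apply Rmin_glb_lt; lra)) as [I2 HI2].
      destruct (Hc (eps/4) ltac:(lra)) as [K HK].
      set (i := max I1 (max I2 K)). exists i. intros j Hj.
      pose proof (qd_tri X HX (n, v j) (n, v (t i)) (n, sq X rs qs)).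
      pose proof (qd_tri X HX (n, v (t i)) (n, sq X (r i) (q i)) (n, sq X rs qs)).
      rewrite Hqb in H.
      assert (dist (Ntens X) (c (s j)) (c (s (t i))) < eps / 4).
      { apply HK. apply (Nat.le_trans _ j); [lia|apply Hsj].
        apply (Nat.le_trans _ (t i)); [|apply Hsj]. apply (Nat.le_trans _ i); [lia|apply Hti]. }
      pose proof (Hclose i). specialize (HI1 i ltac:(lia)). specialize (HI2 i ltac:(lia)).
      pose proof (Rmin_l 1 (eps/4)). pose proof (Rmin_r 1 (eps/4)).
      pose proof (qd_le_same X HX n (sq X (r i) (q i)) (sq X rs qs)).
      assert (HLL : L1 (r i) (q i) rs qs < 1).
      { unfold L1 in *. rewrite (Rabs_minus_sym (r i)), (Rabs_minus_sym (q i)). lra. }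
      pose proof (sq_le_L1 X HX _ _ _ _ (HM i) HMs HLL) as HSQ.
      unfold L1 in *. rewrite (Rabs_minus_sym (r i)), (Rabs_minus_sym (q i)) in HSQ.
      lra. }
  destruct Key as [L HL]. exists (cls (gen X) L). intros eps He.
  destruct (HL (eps/2) ltac:(lra)) as [J HJ]. destruct (Hc (eps/2) ltac:(lra)) as [K HK].
  exists (max J K). intros k Hk.
  rewrite Ndist_rep. rewrite (qd_eqcl_r X HX _ _ L) by (apply rep_cls).
  pose proof (qd_tri X HX (rep (c k)) (rep (c (s (max J K)))) L).
  rewrite Hb in H. specialize (HJ (max J K) ltac:(lia)).
  assert (dist (Ntens X) (c k) (c (s (max J K))) < eps / 2).
  { apply HK. lia. apply (Nat.le_trans _ (max J K)); [lia|apply Hsj]. }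
  rewrite Ndist_rep, Hb in H0. lra.
Qed.
End NXC.


Definition to0 (f : nat -> R) : Prop := forall eps, 0 < eps -> exists N, forall k, (N <= k)%nat -> f k < eps.

Section Theta.
Context (W : SqRaw) (HW : isSquaMS W) (lam : car (Ntens W) -> car W)
  (Hlam : is_morph (Ntens W) W lam).
Notation V := (Compl W HW).
Notation d := (dist W).
Let HV := C_SquaMS W HW.
Let HNW := Ntens_SquaMS W HW.

Lemma cls_to0 (u u' : CS W) : cls (crel W) u = cls (crel W) u' -> to0 (fun k => d (sq_of W u k) (sq_of W u' k)).
Proof.
  intros H eps He. apply cls_inj in H. apply (eqcl_crel W HW) in H.
  destruct (DD_spec W HW u u' eps He) as [N HN]. exists N. intros k Hk. specialize (HN k Hk).
  rewrite H in HN. unfold R_dist in HN. rabs.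
Qed.

Lemma to0_const_sq (u : CS W) x : cls (crel W) u = emb W HW x -> to0 (fun k => d (sq_of W u k) x).
Proof. intro H. apply (cls_to0 u (exist _ (fun _ => x) (const_cauchy W HW x))). exact H. Qed.

Lemma claimR a b : eqcl (gen V) a b -> forall u u' : CS W, cls (crel W) u = snd a -> cls (crel W) u' = snd b ->
  to0 (fun k => qd W ((fst a, sq_of W u k)) ((fst b, sq_of W u' k))).
Proof.
  intro H. induction H as [a b Hg| a | a b H IH | a b c H1 IH1 H2 IH2]; intros u u' Hu Hu'.
  - destruct Hg as (m & m' & r & s & r' & s' & H1 & H2 & H3 & H4 & H5 & -> & ->). simpl in *.
    pose proof (to0_const_sq u (sq W r s) Hu) as T1. pose proof (to0_const_sq u' (sq W r' s') Hu') as T2.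
    intros eps He. destruct (T1 eps He) as [N1 HN1]. destruct (T2 eps He) as [N2 HN2].
    exists (max N1 N2). intros k Hk. specialize (HN1 k ltac:(lia)). specialize (HN2 k ltac:(lia)).
    pose proof (qd_tri W HW (m, sq_of W u k) (m, sq W r s) (m', sq_of W u' k)).
    pose proof (qd_tri W HW (m, sq W r s) (m', sq W r' s') (m', sq_of W u' k)).
    rewrite (qd_eqcl0 W HW (m, sq W r s) (m', sq W r' s')) in H0.
    2: { apply eqcl_step. exists m, m', r, s, r', s'. repeat split; auto; apply H1 || apply H2. }
    pose proof (qd_le_same W HW m (sq_of W u k) (sq W r s)).
    pose proof (qd_le_same W HW m' (sq W r' s') (sq_of W u' k)).
    rewrite (sq_sym W HW (sq W r' s')) in H7. lra.
  - rewrite <- Hu' in Hu. pose proof (cls_to0 u u' Hu) as T.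
    intros eps He. destruct (T eps He) as [N HN]. exists N. intros k Hk. specialize (HN k Hk).
    pose proof (qd_le_same W HW (fst a) (sq_of W u k) (sq_of W u' k)).
    pose proof (dist_nonneg W HW (sq_of W u k) (sq_of W u' k)). lra.
  - intros eps He. destruct (IH u' u Hu' Hu eps He) as [N HN]. exists N. intros k Hk.
    rewrite qd_sym by auto. auto.
  - set (u'' := rep (snd b)). assert (Hu'' : cls (crel W) u'' = snd b) by apply cls_rep.
    intros eps He. destruct (IH1 u u'' Hu Hu'' (eps/2) ltac:(lra)) as [N1 HN1].
    destruct (IH2 u'' u' Hu'' Hu' (eps/2) ltac:(lra)) as [N2 HN2].
    exists (max N1 N2). intros k Hk. specialize (HN1 k ltac:(lia)). specialize (HN2 k ltac:(lia)).
    pose proof (qd_tri W HW (fst a, sq_of W u k) (fst b, sq_of W u'' k) (fst c, sq_of W u' k)). lra.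
Qed.

Lemma lamseq_cauchy n (u : CS W) : cauchy d (fun k => lam (cls (gen W) (n, sq_of W u k))).
Proof.
  intros eps He. destruct (proj2_sig u eps He) as [N HN]. exists N. intros i j Hi Hj.
  specialize (HN i j Hi Hj). pose proof (proj1 Hlam (cls (gen W) (n, sq_of W u i)) (cls (gen W) (n, sq_of W u j))).
  rewrite Ndist_cls in H by auto. pose proof (qd_le_same W HW n (sq_of W u i) (sq_of W u j)).
  unfold sq_of in *. pose proof (dist_nonneg W HW (proj1_sig u i) (proj1_sig u j)). lra.
Qed.

Lemma theta_cls n (u : CS W) :
  theta W HW lam (cls (gen V) (n, cls (crel W) u)) =
  cls (crel W) (exist _ _ (lamseq_cauchy n u)).
Proof.
  unfold theta. cbv zeta. set (c := cls (gen V) (n, cls (crel W) u)).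
  set (a := rep c). set (u' := rep (snd a)).
  rewrite (mkC_cls W HW (fun k => lam (cls (gen W) (fst a, proj1_sig u' k))) (lamseq_cauchy (fst a) u')).
  apply cls_eq. apply eqcl_step. apply (proj2 (crel_DD W HW _ _)). apply Rle_antisym; [|apply DD_nonneg; auto].
  apply DD_le; auto. intros eps He.
  assert (Ha : eqcl (gen V) a (n, cls (crel W) u)) by apply rep_cls.
  destruct (claimR _ _ Ha u' u (cls_rep _ _) eq_refl eps He) as [N HN].
  exists N. intros k Hk. specialize (HN k Hk). unfold sq_of at 1 2. simpl.
  pose proof (proj1 Hlam (cls (gen W) (fst a, proj1_sig u' k)) (cls (gen W) (n, proj1_sig u k))).
  rewrite Ndist_cls in H by auto. simpl in HN. unfold sq_of in HN. unfold sq_of in *. eapply Rle_trans; [exact H|]. rewrite Rplus_0_l. apply Rlt_le. exact HN.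
Qed.

Lemma theta_emb n x : theta W HW lam (cls (gen V) (n, emb W HW x)) = emb W HW (lam (cls (gen W) (n, x))).
Proof.
  unfold emb at 1. rewrite theta_cls. unfold emb. apply cls_eq. apply eqcl_step.
  apply (proj2 (crel_DD W HW _ _)). apply Rle_antisym; [|apply DD_nonneg; auto]. apply DD_le; auto. intros. exists 0%nat. intros.
  unfold sq_of. simpl. rewrite dist_refl by auto. lra.
Qed.

Lemma emb_morph : is_morph W V (emb W HW).
Proof. split. intros. rewrite distC_emb. lra. intros. reflexivity. Qed.

Lemma transport l : forall a b u u', chain_ok V a b l -> cls (crel W) u = snd a -> cls (crel W) u' = snd b ->
  forall eps, 0 < eps -> exists N, forall k, (N <= k)%nat ->
  qd W (fst a, sq_of W u k) (fst b, sq_of W u' k) <= chain_cost V l + eps.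
Proof.
  induction l as [|[x y] l IH]; simpl; intros a b u u' Hl Hu Hu' eps He.
  - destruct (claimR a b Hl u u' Hu Hu' eps He) as [N HN]. exists N. intros k Hk.
    specialize (HN k Hk). simpl in HN. lra.
  - destruct Hl as [Hax Hyb].
    set (ux := rep (snd x)). set (uy := rep (snd y)).
    assert (Hux : cls (crel W) ux = snd x) by apply cls_rep.
    assert (Huy : cls (crel W) uy = snd y) by apply cls_rep.
    destruct (claimR a x Hax u ux Hu Hux (eps/3) ltac:(lra)) as [N1 HN1].
    destruct (IH y b uy u' Hyb Huy Hu' (eps/3) ltac:(lra)) as [N2 HN2].
    destruct (DD_near W HW ux uy (eps) He) as [N3 HN3].
    exists (max N1 (max N2 N3)). intros k Hk.
    specialize (HN1 k ltac:(lia)). specialize (HN2 k ltac:(lia)). specialize (HN3 k ltac:(lia)).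
    pose proof (qd_tri W HW (fst a, sq_of W u k) (fst x, sq_of W ux k) (fst b, sq_of W u' k)).
    pose proof (qd_tri W HW (fst x, sq_of W ux k) (fst y, sq_of W uy k) (fst b, sq_of W u' k)).
    pose proof (qd_le_d0 W HW (fst x, sq_of W ux k) (fst y, sq_of W uy k)).
    assert (d0 W (fst x, sq_of W ux k) (fst y, sq_of W uy k) <= d0 V x y + eps / 3).
    { unfold d0. cbn [fst snd]. destruct N_eq_dec; [|lra].
      change (dist V (snd x) (snd y)) with (DD W (rep (snd x)) (rep (snd y))).
      fold ux uy. rabs. }
    simpl in *. lra.
Qed.

Lemma theta_rep c : theta W HW lam c =
  cls (crel W) (exist _ _ (lamseq_cauchy (fst (rep c)) (rep (snd (rep c))))).
Proof.
  unfold theta. cbv zeta.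
  apply (mkC_cls W HW (fun k => lam (cls (gen W) (fst (rep c), proj1_sig (rep (snd (rep c))) k)))).
Qed.

Context (Hiso : forall a b, dist W (lam a) (lam b) = dist (Ntens W) a b).

Lemma theta_iso c c' : dist V (theta W HW lam c) (theta W HW lam c') = dist (Ntens V) c c'.
Proof.
  rewrite !theta_rep. rewrite distC_cls. rewrite Ndist_rep.
  set (a := rep c). set (b := rep c'). fold a b.
  set (u := rep (snd a)). set (u' := rep (snd b)).
  assert (Hu : cls (crel W) u = snd a) by apply cls_rep.
  assert (Hu' : cls (crel W) u' = snd b) by apply cls_rep.
  assert (Hd : forall k, d (sq_of W (exist _ _ (lamseq_cauchy (fst a) u)) k)
                           (sq_of W (exist _ _ (lamseq_cauchy (fst b) u')) k) =
                       qd W (fst a, sq_of W u k) (fst b, sq_of W u' k)).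
  { intro k. unfold sq_of. cbn [proj1_sig]. cbn [proj1_sig]. rewrite Hiso. apply Ndist_cls; auto. }
  apply Rle_antisym.
  - apply le_epsilon'. intros eps He.
    destruct (qd_approx V HV a b (eps/2) ltac:(lra)) as [l [Hl Hc]].
    assert (DD W (exist _ _ (lamseq_cauchy (fst a) u)) (exist _ _ (lamseq_cauchy (fst b) u'))
            <= chain_cost V l + eps / 2).
    { apply DD_le; auto. intros e He'. destruct (transport l a b u u' Hl Hu Hu' e He') as [N HN].
      exists N. intros k Hk. rewrite Hd. specialize (HN k Hk). lra. }
    eapply Rle_trans; [apply H|]. unfold qd in *. lra.
  - apply le_epsilon'. intros eps He.
    destruct (DD_near W HW (exist _ _ (lamseq_cauchy (fst a) u)) (exist _ _ (lamseq_cauchy (fst b) u')) (eps/3) ltac:(lra)) as [N1 HN1].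
    destruct (emb_near W HW u (eps) He) as [N2 HN2].
    destruct (emb_near W HW u' (eps) He) as [N3 HN3].
    set (k := max N1 (max N2 N3)).
    specialize (HN1 k ltac:(lia)). specialize (HN2 k ltac:(lia)). specialize (HN3 k ltac:(lia)).
    rewrite Hd in HN1. rewrite Hu in HN2. rewrite Hu' in HN3.
    pose proof (qd_tri V HV a (fst a, emb W HW (sq_of W u k)) b).
    pose proof (qd_tri V HV (fst a, emb W HW (sq_of W u k)) (fst b, emb W HW (sq_of W u' k)) b).
    pose proof (qd_map W V HV (emb W HW) emb_morph (fst a, sq_of W u k) (fst b, sq_of W u' k)) as HM.
    unfold Fm in HM. cbn [fst snd] in HM.
    assert (E1 : qd V a (fst a, emb W HW (sq_of W u k)) <= eps / 3).
    { rewrite (surjective_pairing a) at 1. eapply Rle_trans. apply qd_le_same; auto. lra. }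
    assert (E2 : qd V (fst b, emb W HW (sq_of W u' k)) b <= eps / 3).
    { rewrite (surjective_pairing b) at 2. eapply Rle_trans. apply qd_le_same; auto.
      rewrite distC_sym. lra. }
    unfold qd in *. rabs.
Qed.

End Theta.


Section Theta2.
Context (W : SqRaw) (HW : isSquaMS W) (lam : car (Ntens W) -> car W)
  (Hlam : is_morph (Ntens W) W lam)
  (g : car W -> car (Ntens W)) (Hg : is_morph W (Ntens W) g)
  (Hlg : forall x, lam (g x) = x) (Hgl : forall c, g (lam c) = c)
  (Hiso : forall a b, dist W (lam a) (lam b) = dist (Ntens W) a b).
Notation V := (Compl W HW).
Notation th := (theta W HW lam).
Let HV := C_SquaMS W HW.
Let HNV := Ntens_SquaMS V HV.

Lemma theta_inj c c' : th c = th c' -> c = c'.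
Proof.
  intro H. apply (sq_zero _ HNV). rewrite <- (theta_iso W HW lam Hlam Hiso). rewrite H.
  apply (sq_zero _ HV). reflexivity.
Qed.

Lemma theta_Nemb x : th (Ntens_map W V (emb W HW) (g x)) = emb W HW x.
Proof.
  rewrite <- (cls_rep _ (g x)). rewrite (Nmap_cls W V (emb W HW) (emb_morph W HW)).
  unfold Fm. rewrite theta_emb by auto. f_equal. rewrite <- surjective_pairing.
  rewrite cls_rep. apply Hlg.
Qed.

Lemma theta_surj v : exists c, th c = v.
Proof.
  set (w := fun k => sq_of W (rep v) k).
  set (ck := fun k => Ntens_map W V (emb W HW) (g (w k))).
  assert (Hc : cauchy (dist (Ntens V)) ck).
  { intros eps He. destruct (proj2_sig (rep v) eps He) as [N HN]. exists N. intros i j Hi Hj.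
    unfold ck. rewrite <- (theta_iso W HW lam Hlam Hiso), !theta_Nemb, distC_emb. apply HN; auto. }
  destruct (NX_Complete V HV (C_Complete W HW) ck Hc) as [c Hcl].
  exists c. apply (sq_zero _ HV). apply Rle_antisym; [| apply distC_nonneg].
  apply le_epsilon'. intros eps He.
  destruct (Hcl (eps/2) ltac:(lra)) as [N1 H1].
  destruct (rep_near W HW v (eps/2) ltac:(lra)) as [N2 H2].
  set (k := max N1 N2). specialize (H1 k ltac:(lia)). specialize (H2 k ltac:(lia)).
  pose proof (distC_tri W HW (th c) (th (ck k)) v).
  rewrite (theta_iso W HW lam Hlam Hiso) in H. unfold ck in H. rewrite theta_Nemb in H.
  rewrite (distC_sym W HW (emb W HW (w k)) v) in H.
  rewrite (sq_sym _ HNV) in H1. unfold ck in H1. unfold w in H, H1. lra.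
Qed.

Lemma theta_sq r s : inM0 r s -> th (sq (Ntens V) r s) = sq V r s.
Proof.
  intro H. rewrite sqN_canon. unfold canon. rewrite sqC. rewrite theta_emb by auto.
  rewrite sqC. f_equal. rewrite <- (proj2 Hlam r s H). reflexivity.
Qed.

Lemma thinv_exists : exists thinv : car V -> car (Ntens V),
    (forall v, th (thinv v) = v) /\
    (forall c, thinv (th c) = c) /\
    is_morph V (Ntens V) thinv.
Proof.
  exists (fun v => proj1_sig (constructive_indefinite_description _ (theta_surj v))).
  assert (H1 : forall v, th (proj1_sig (constructive_indefinite_description _ (theta_surj v))) = v).
  { intro v. destruct constructive_indefinite_description. simpl. auto. }
  split; [auto| split].
  - intro c. apply theta_inj. apply H1.
  - split.
    + intros v v'. rewrite <- (theta_iso W HW lam Hlam Hiso), !H1. lra.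
    + intros r s H. apply theta_inj. rewrite H1. rewrite theta_sq; auto.
Qed.
End Theta2.


Lemma toR_inj a b : toR a = toR b -> a = b.
Proof. destruct a, b; simpl; intro; try lra; reflexivity. Qed.

Fixpoint gridpt (j : nat) (x : R) : Prop :=
  match j with O => x = 0 \/ x = 1 | S j' => exists t : three, gridpt j' (3 * x - toR t) end.

Lemma gridpt_range j x : gridpt j x -> 0 <= x <= 1.
Proof.
  revert x. induction j; simpl; intros x H.
  - destruct H; lra.
  - destruct H as [t Ht]. apply IHj in Ht. pose proof (toR_range t). destruct t; simpl in *; lra.
Qed.

Lemma gridpt_S j x : gridpt j x -> gridpt (S j) x.
Proof.
  revert x. induction j; intros x H.
  - simpl in H. destruct H as [-> | ->]; simpl.
    + exists I0. simpl. left. lra.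
    + exists I2. simpl. right. lra.
  - destruct H as [t Ht]. exists t. apply IHj. exact Ht.
Qed.

Lemma gridpt_le j j' x : (j <= j')%nat -> gridpt j x -> gridpt j' x.
Proof. induction 1; auto. intro. apply gridpt_S. auto. Qed.

Lemma gridpt_01 j x : (x = 0 \/ x = 1) -> gridpt j x.
Proof. intro H. apply (gridpt_le 0); [lia| exact H]. Qed.

Lemma dens j x : 0 <= x <= 1 -> exists a, gridpt j a /\ Rabs (x - a) <= tp j.
Proof.
  revert x. induction j; intros x Hx.
  - exists 0. split. left; reflexivity. unfold tp. simpl. rabs.
  - set (t := ncoord x). pose proof (ncoord_range x Hx) as Hr. fold t in Hr.
    destruct (IHj (3 * x - toR t) Hr) as [a' [Ha' Hd]].
    exists ((a' + toR t) / 3). split.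
    + exists t. replace (3 * ((a' + toR t) / 3) - toR t) with a' by lra. exact Ha'.
    + rewrite tp_S. rabs.
Qed.

Definition three_eq_dec (a b : three) : {a = b} + {a <> b}.
Proof. decide equality. Defined.

Section Grid.
Context (W : SqRaw) (HW : isSquaMS W) (lam : car (Ntens W) -> car W)
  (Hlam : is_morph (Ntens W) W lam).
Notation d := (dist W).

Fixpoint iota (j : nat) (x y : R) : car W :=
  match j with
  | O => sq W x y
  | S j' => lam (cls (gen W) ((ncoord x, ncoord y),
                  iota j' (3 * x - toR (ncoord x)) (3 * y - toR (ncoord y))))
  end.

Lemma iota_M0 j x y : inM0 x y -> iota j x y = sq W x y.
Proof.
  revert x y. induction j; intros x y H; simpl; auto.
  rewrite IHj by (apply ncoord_M0; auto).
  rewrite <- (proj2 Hlam x y H). reflexivity.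
Qed.

Lemma cell_diff (t : three) x : 0 <= 3 * x - toR t <= 1 -> 0 <= x <= 1 -> t <> ncoord x ->
  (3 * x - toR t = 0 \/ 3 * x - toR t = 1) /\
  (3 * x - toR (ncoord x) = 0 \/ 3 * x - toR (ncoord x) = 1).
Proof.
  intros H1 Hx Hne. pose proof (ncoord_range x Hx).
  assert (toR t <> toR (ncoord x)) by (intro E; apply Hne; apply toR_inj; auto).
  destruct t, (ncoord x); simpl in *; try congruence; split; lra.
Qed.

Lemma iota_cell j x y (n : N) : 0 <= x <= 1 -> 0 <= y <= 1 ->
  0 <= 3 * x - toR (fst n) <= 1 -> 0 <= 3 * y - toR (snd n) <= 1 ->
  iota (S j) x y = lam (cls (gen W) (n, iota j (3 * x - toR (fst n)) (3 * y - toR (snd n)))).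
Proof.
  intros Hx Hy H1 H2. simpl. destruct n as [n1 n2]. simpl in *.
  destruct (N_eq_dec (n1, n2) (ncoord x, ncoord y)) as [E|E].
  - inversion E. subst. reflexivity.
  - pose proof (ncoord_range x Hx). pose proof (ncoord_range y Hy).
    assert (HM : inM0 (3 * x - toR n1) (3 * y - toR n2) /\
                 inM0 (3 * x - toR (ncoord x)) (3 * y - toR (ncoord y))).
    { destruct (three_eq_dec n1 (ncoord x)) as [e1|e1].
      - assert (e2 : n2 <> ncoord y) by (intro; apply E; subst; reflexivity).
        destruct (cell_diff n2 y H2 Hy e2) as [[A|A] [B|B]]; subst;
        (split; split; [lra| split; [lra| side]|lra| split; [lra| side]]).
      - destruct (cell_diff n1 x H1 Hx e1) as [[A|A] [B|B]];
        (split; split; [lra| split; [lra| side]|lra| split; [lra| side]]). }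
    destruct HM as [M1 M2].
    rewrite !iota_M0 by auto. f_equal. apply cls_eq. apply glue; auto; simpl; lra.
Qed.

Lemma lam_loc n a b : d (lam (cls (gen W) (n, a))) (lam (cls (gen W) (n, b))) <= d a b / 3.
Proof.
  eapply Rle_trans. apply (proj1 Hlam). rewrite Ndist_cls by auto. apply qd_le_same; auto.
Qed.

Lemma vert j a y y' : gridpt j a -> 0 <= y <= 1 -> 0 <= y' <= 1 ->
  d (iota j a y) (iota j a y') <= Rabs (y - y').
Proof.
  revert a y y'. induction j; intros a y y' Ha Hy Hy'.
  - simpl in Ha. simpl. destruct Ha as [-> | ->].
    + rewrite sideL by auto. rabs.
    + rewrite sideR by auto. rabs.
  - destruct Ha as [t Ht]. pose proof (gridpt_range _ _ Ht) as Hr.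
    assert (Ha : 0 <= a <= 1) by (pose proof (toR_range t); destruct t; simpl in *; lra).
    apply (thirds (fun y y' => d (iota (S j) a y) (iota (S j) a y'))); auto.
    + intros. apply (sq_tri W HW).
    + intros r z z' Hz Hz'. pose proof (toR_range r).
      rewrite (iota_cell j a z (t, r)), (iota_cell j a z' (t, r)); simpl; try lra.
      eapply Rle_trans. apply lam_loc. specialize (IHj (3 * a - toR t) (3 * z - toR r) (3 * z' - toR r) Ht ltac:(lra) ltac:(lra)).
      rabs.
Qed.

Lemma horz j b x x' : gridpt j b -> 0 <= x <= 1 -> 0 <= x' <= 1 ->
  d (iota j x b) (iota j x' b) <= Rabs (x - x').
Proof.
  revert b x x'. induction j; intros b x x' Hb Hx Hx'.
  - simpl in Hb. simpl. destruct Hb as [-> | ->].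
    + rewrite sideB by auto. rabs.
    + rewrite sideT by auto. rabs.
  - destruct Hb as [t Ht]. pose proof (gridpt_range _ _ Ht) as Hr.
    assert (Hb : 0 <= b <= 1) by (pose proof (toR_range t); destruct t; simpl in *; lra).
    apply (thirds (fun x x' => d (iota (S j) x b) (iota (S j) x' b))); auto.
    + intros. apply (sq_tri W HW).
    + intros r z z' Hz Hz'. pose proof (toR_range r).
      rewrite (iota_cell j z b (r, t)), (iota_cell j z' b (r, t)); simpl; try lra.
      eapply Rle_trans. apply lam_loc. specialize (IHj (3 * b - toR t) (3 * z - toR r) (3 * z' - toR r) Ht ltac:(lra) ltac:(lra)).
      rabs.
Qed.

Lemma compat j a y : gridpt j a -> 0 <= y <= 1 -> iota (S j) a y = iota j a y.
Proof.
  revert a y. induction j; intros a y Ha Hy.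
  - rewrite !iota_M0; auto; simpl in Ha; destruct Ha as [-> | ->]; split; try lra; split; try lra; side.
  - destruct Ha as [t Ht]. pose proof (gridpt_range _ _ Ht) as Hr.
    assert (Ha : 0 <= a <= 1) by (pose proof (toR_range t); destruct t; simpl in *; lra).
    pose proof (ncoord_range y Hy).
    rewrite (iota_cell (S j) a y (t, ncoord y)) by (simpl; auto). cbn [fst snd].
    rewrite (IHj (3 * a - toR t) (3 * y - toR (ncoord y))); auto.
    rewrite (iota_cell j a y (t, ncoord y)) by (simpl; auto). reflexivity.
Qed.

Lemma compat_le j j' a y : (j <= j')%nat -> gridpt j a -> 0 <= y <= 1 -> iota j' a y = iota j a y.
Proof.
  induction 1; intros Ha Hy; auto. rewrite compat; auto. apply (gridpt_le j); auto.
Qed.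

Lemma path j a b y y' : gridpt j a -> gridpt j b -> 0 <= y <= 1 -> 0 <= y' <= 1 ->
  d (iota j a y) (iota j b y') <= Rabs (a - b) + Rabs (y - y') + 2 * tp j.
Proof.
  intros Ha Hb Hy Hy'. destruct (dens j y Hy) as [c [Hc Hyc]].
  pose proof (gridpt_range _ _ Hc). pose proof (gridpt_range _ _ Ha). pose proof (gridpt_range _ _ Hb).
  pose proof (vert j a y c Ha Hy H). pose proof (horz j c a b Hc H0 H1).
  pose proof (vert j b c y' Hb H Hy').
  pose proof (sq_tri W HW (iota j a y) (iota j a c) (iota j b y')).
  pose proof (sq_tri W HW (iota j a c) (iota j b c) (iota j b y')).
  rabs.
Qed.

Definition af (x : R) (j : nat) : R :=
  proj1_sig (constructive_indefinite_description _ (dens j (clamp x) (clamp_range x))).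
Lemma af_spec x j : gridpt j (af x j) /\ Rabs (clamp x - af x j) <= tp j.
Proof. unfold af. destruct constructive_indefinite_description. simpl. auto. Qed.

Definition kseq (x y : R) (j : nat) : car W := iota j (af x j) (clamp y).

Lemma kseq_near x y j j' : (j <= j')%nat -> d (kseq x y j) (kseq x y j') <= 4 * tp j.
Proof.
  intro Hj. unfold kseq. destruct (af_spec x j) as [A1 A2]. destruct (af_spec x j') as [B1 B2].
  rewrite <- (compat_le j j' (af x j) (clamp y) Hj A1 (clamp_range y)).
  pose proof (path j' (af x j) (af x j') (clamp y) (clamp y) (gridpt_le j j' _ Hj A1) B1
    (clamp_range y) (clamp_range y)).
  pose proof (tp_mono j j' Hj). rewrite Rminus_diag, Rabs_R0 in H. rabs.
Qed.

Lemma kseq_cauchy x y : cauchy d (kseq x y).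
Proof.
  intros eps He. destruct (tp_small (eps / 8) ltac:(lra)) as [K HK]. exists K. intros m n Hm Hn.
  destruct (Nat.le_ge_cases m n) as [H|H].
  - pose proof (kseq_near x y m n H). specialize (HK m Hm). lra.
  - pose proof (kseq_near x y n m H). specialize (HK n Hn). rewrite (sq_sym W HW) in H0. lra.
Qed.

Definition kk (x y : R) : car (Compl W HW) := cls (crel W) (exist _ _ (kseq_cauchy x y)).

Lemma kk_short x y x' y' : 0 <= x <= 1 -> 0 <= y <= 1 -> 0 <= x' <= 1 -> 0 <= y' <= 1 ->
  dist (Compl W HW) (kk x y) (kk x' y') <= Rabs (x - x') + Rabs (y - y').
Proof.
  intros Hx Hy Hx' Hy'. unfold kk. rewrite distC_cls. apply DD_le; auto.
  intros eps He. destruct (tp_small (eps / 4) ltac:(lra)) as [K HK]. exists K. intros k Hk.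
  unfold sq_of. simpl. unfold kseq. destruct (af_spec x k) as [A1 A2]. destruct (af_spec x' k) as [B1 B2].
  pose proof (path k (af x k) (af x' k) (clamp y) (clamp y') A1 B1 (clamp_range y) (clamp_range y')).
  rewrite !clamp_id in * by auto. specialize (HK k Hk). rabs.
Qed.

Lemma kk_M0 x y : inM0 x y -> kk x y = sq (Compl W HW) x y.
Proof.
  intro H. unfold kk. rewrite sqC. unfold emb. apply cls_eq. apply eqcl_step.
  apply (proj2 (crel_DD W HW _ _)). apply Rle_antisym; [| apply DD_nonneg; auto].
  apply DD_le; auto. intros eps He. destruct (tp_small (eps / 4) ltac:(lra)) as [K HK].
  exists K. intros k Hk. unfold sq_of. simpl. unfold kseq. destruct H as (Hx & Hy & Hs).
  rewrite !clamp_id by auto. destruct (af_spec x k) as [A1 A2]. rewrite clamp_id in A2 by auto.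
  rewrite <- (iota_M0 k x y) by (split; auto).
  specialize (HK k Hk).
  destruct Hs as [E|[E|[E|E]]].
  - pose proof (path k (af x k) x y y A1 (gridpt_01 k x (or_introl E)) Hy Hy).
    rewrite Rminus_diag, Rabs_R0 in H. rabs.
  - pose proof (path k (af x k) x y y A1 (gridpt_01 k x (or_intror E)) Hy Hy).
    rewrite Rminus_diag, Rabs_R0 in H. rabs.
  - pose proof (horz k y (af x k) x (gridpt_01 k y (or_introl E)) (gridpt_range _ _ A1) Hx). rabs.
  - pose proof (horz k y (af x k) x (gridpt_01 k y (or_intror E)) (gridpt_range _ _ A1) Hx). rabs.
Qed.

End Grid.


Section Final.
Context (W : SqRaw) (HW : isSquaMS W) (lam : car (Ntens W) -> car W)
  (Hlam : is_morph (Ntens W) W lam)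
  (Hiso : forall a b, dist W (lam a) (lam b) = dist (Ntens W) a b)
  (thinv : car (Compl W HW) -> car (Ntens (Compl W HW)))
  (Hth1 : forall v, theta W HW lam (thinv v) = v)
  (Hth2 : forall c, thinv (theta W HW lam c) = c)
  (Hthm : is_morph (Compl W HW) (Ntens (Compl W HW)) thinv).
Notation V := (Compl W HW).
Notation th := (theta W HW lam).
Let HV := C_SquaMS W HW.

Lemma th_sq r s : inM0 r s -> th (sq (Ntens V) r s) = sq V r s.
Proof. intro H. rewrite <- (proj2 Hthm r s H). apply Hth1. Qed.

Context (Y : SqRaw) (HY : isSquaMS Y) (gam : car Y -> car (Ntens Y)) (Hgam : is_morph Y (Ntens Y) gam).

Definition Phi (h : car Y -> car V) (y : car Y) : car V := th (Ntens_map Y V h (gam y)).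

Lemma Phi_morph h : is_morph Y V h -> is_morph Y V (Phi h).
Proof.
  intro Hh. split.
  - intros y y'. unfold Phi. rewrite (theta_iso W HW lam Hlam Hiso).
    pose proof (proj1 (Nmap_morph Y V HY HV h Hh) (gam y) (gam y')).
    pose proof (proj1 Hgam y y'). lra.
  - intros r s H. unfold Phi. rewrite (proj2 Hgam r s H).
    rewrite (proj2 (Nmap_morph Y V HY HV h Hh) r s H). apply th_sq; auto.
Qed.

Lemma Phi_contract h h' B : (forall y, dist V (h y) (h' y) <= B) ->
  forall y, dist V (Phi h y) (Phi h' y) <= B / 3.
Proof.
  intros H y. unfold Phi. rewrite (theta_iso W HW lam Hlam Hiso).
  eapply Rle_trans. apply Nmap_contract; auto. specialize (H (snd (rep (gam y)))). lra.
Qed.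

Definition h0 (y : car Y) : car V := kk W HW lam Hlam (psix Y y) (psiy Y y).

Lemma h0_morph : is_morph Y V h0.
Proof.
  split.
  - intros y y'. unfold h0. destruct (psi_range Y y), (psi_range Y y').
    eapply Rle_trans. apply kk_short; auto. apply psi_lip; auto.
  - intros r s H. unfold h0. destruct (psi_sq Y HY r s H) as [-> ->]. apply kk_M0; auto.
Qed.

Definition hs (k : nat) : car Y -> car V := Nat.iter k Phi h0.

Lemma hs_morph k : is_morph Y V (hs k).
Proof. induction k; simpl. apply h0_morph. apply Phi_morph. exact IHk. Qed.

Lemma hs_step k : forall y, dist V (hs (S k) y) (hs k y) <= 2 * tp k.
Proof.
  induction k; intro y.
  - replace (tp 0) with 1 by (unfold tp; simpl; lra). pose proof (sq_bound V HV (hs 1 y) (hs 0 y)). lra.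
  - change (hs (S (S k)) y) with (Phi (hs (S k)) y). change (hs (S k) y) with (Phi (hs k) y).
    eapply Rle_trans. apply (Phi_contract (hs (S k)) (hs k) (2 * tp k) IHk). rewrite tp_S. lra.
Qed.

Lemma hs_cauchy k m y : (k <= m)%nat -> dist V (hs k y) (hs m y) <= 3 * tp k - 3 * tp m.
Proof.
  induction 1.
  - rewrite (proj2 (sq_zero V HV _ _) eq_refl). lra.
  - pose proof (sq_tri V HV (hs k y) (hs m y) (hs (S m) y)).
    pose proof (hs_step m y). rewrite (sq_sym V HV) in H1. rewrite tp_S. lra.
Qed.

Lemma lim_exists : forall y, exists l, forall k, dist V (hs k y) l <= 3 * tp k.
Proof.
  intro y. apply (complete W HW (fun k => hs k y) (fun k => 3 * tp k)).
  - intros eps He. destruct (tp_small (eps/3) ltac:(lra)) as [K HK]. exists K. intros k Hk.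
    specialize (HK k Hk). lra.
  - intros k m Hkm. pose proof (hs_cauchy k m y Hkm). pose proof (tp_pos m). lra.
Qed.

Lemma finality : exists! h : car Y -> car V,
  is_morph Y V h /\ forall y, thinv (h y) = Ntens_map Y V h (gam y).
Proof.
  destruct (choice _ lim_exists) as [h Hh].
  assert (Hm : is_morph Y V h).
  { split.
    - intros y y'. cut (dist V (h y) (h y') - dist Y y y' <= 0); [lra|]. apply (le_all_tp _ 6). intro k.
      pose proof (sq_tri V HV (h y) (hs k y) (h y')).
      pose proof (sq_tri V HV (hs k y) (hs k y') (h y')).
      pose proof (Hh y k). pose proof (Hh y' k). rewrite (sq_sym V HV) in H1.
      pose proof (proj1 (hs_morph k) y y'). lra.
    - intros r s H. apply (sq_zero V HV). apply Rle_antisym; [| apply dist_nonneg; auto].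
      apply (le_all_tp _ 3). intro k. pose proof (Hh (sq Y r s) k).
      rewrite (proj2 (hs_morph k) r s H) in H0. rewrite (sq_sym V HV). lra. }
  assert (Hfix : forall y, Phi h y = h y).
  { intro y. apply (sq_zero V HV). apply Rle_antisym; [| apply dist_nonneg; auto].
    apply (le_all_tp _ 2). intro k.
    pose proof (sq_tri V HV (Phi h y) (Phi (hs k) y) (h y)).
    assert (A : forall y, dist V (h y) (hs k y) <= 3 * tp k).
    { intro z. rewrite (sq_sym V HV). apply Hh. }
    pose proof (Phi_contract h (hs k) _ A y).
    pose proof (Hh y (S k)). change (hs (S k) y) with (Phi (hs k) y) in H1.
    rewrite tp_S in H1. lra. }
  exists h. split.
  - split; auto. intro y. rewrite <- (Hfix y) at 1. unfold Phi. apply Hth2.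
  - intros h' [Hm' Heq']. 
    assert (Hfix' : forall y, Phi h' y = h' y).
    { intro y. unfold Phi. rewrite <- Heq'. apply Hth1. }
    apply functional_extensionality. intro y.
    apply (sq_zero V HV). apply Rle_antisym; [| apply dist_nonneg; auto].
    apply (le_all_tp _ 2). intro k. revert y. induction k; intro y.
    + replace (tp 0) with 1 by (unfold tp; simpl; lra). pose proof (sq_bound V HV (h y) (h' y)). lra.
    + rewrite <- (Hfix y), <- (Hfix' y). eapply Rle_trans. apply (Phi_contract h h' _ IHk).
      rewrite tp_S. lra.
Qed.
End Final.

Theorem mainTheorem8
  (W : SqRaw) (HW : isSquaMS W) (lam : car (Ntens W) -> car W)
  (Hlam : is_morph (Ntens W) W lam)
  (Hinit : forall Y : SqRaw, isSquaMS Y ->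
     forall mu : car (Ntens Y) -> car Y, is_morph (Ntens Y) Y mu ->
     exists! g : car W -> car Y,
       is_morph W Y g /\ forall c, g (lam c) = mu (Ntens_map W Y g c)) :
  isSquaMS (Compl W HW) /\
  exists thinv : car (Compl W HW) -> car (Ntens (Compl W HW)),
    (forall v, theta W HW lam (thinv v) = v) /\
    (forall c, thinv (theta W HW lam c) = c) /\
    is_morph (Compl W HW) (Ntens (Compl W HW)) thinv /\
    (forall Y : SqRaw, isSquaMS Y ->
       forall gam : car Y -> car (Ntens Y), is_morph Y (Ntens Y) gam ->
       exists! h : car Y -> car (Compl W HW),
         is_morph Y (Compl W HW) h /\
         forall y, thinv (h y) = Ntens_map Y (Compl W HW) h (gam y)).
Proof.
  split; [apply C_SquaMS|].
  destruct (lam_iso W HW lam Hlam Hinit) as (g & Hg & Hlg & Hgl & Hiso).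
  destruct (thinv_exists W HW lam Hlam g Hlg Hiso) as (thinv & H1 & H2 & H3).
  exists thinv. split; [auto| split; [auto| split; [auto|]]].
  intros Y HY gam Hgam. apply (finality W HW lam Hlam Hiso thinv H1 H2 H3 Y HY gam Hgam).
Qed.
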